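(* Let $M>0$, $\beta^*>0$, $0<I_0<M$ and $0<S_0<M$ with $S_0+I_0=M$. Let $g$ be the log-normal density \[ g(t)=\frac{1}{t\sigma\sqrt{2\pi}}\exp\!\left(-\frac{(\ln t-\mu)^2}{2\sigma^2}\right)\ (t>0),\qquad g(t)=0\ (t\le 0), \] with $\mu\in\mathbb{R}$, $\sigma>0$. Then the system \[ I'(t)=\beta^*(M-I(t))\Big(I(t)-\int_0^t g(t-s)I(s)\,ds\Big),\qquad S'(t)=-\beta^* S(t)\Big(I(t)-\int_0^t g(t-s)I(s)\,ds\Big), \] with $S(0)=S_0$, $I(0)=I_0$, has a unique $C^1$ solution $(S,I)$ on $[0,\infty)$. Moreover $0<S(t)<M$ and $0<I(t)<M$ for all $t\ge 0$, $S(t)$ decreases to a limit $S_\infty>0$, and $I(t)$ increases to a limit $I_\infty<M$.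
   Context: $M$ denotes the total (constant) population; $\beta^*=\beta/M$ with $0<\beta<1$. *)

(* Defs.v *)
From Stdlib Require Import Reals.
From Coquelicot Require Import Coquelicot.
Open Scope R_scope.

Definition lognormal (mu sigma : R) (t : R) : R :=
  if Rlt_dec 0 t then
    / (t * sigma * sqrt (2 * PI)) * exp (- (ln t - mu) ^ 2 / (2 * sigma ^ 2))
  else 0.

Definition conv (g I : R -> R) (t : R) : R :=
  RInt (fun s => g (t - s) * I s) 0 t.

Definition deriv_on_nonneg (f f' : R -> R) : Prop :=
  forall t, 0 <= t ->
    filterlim (fun h => (f (t + h) - f t) / h)
      (within (fun h => h <> 0 /\ 0 <= t + h) (locally 0))
      (locally (f' t)).

Definition cont_on_nonneg (f : R -> R) : Prop :=
  forall t, 0 <= t -> filterlim f (within (fun s => 0 <= s) (locally t)) (locally (f t)).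

Definition is_C1_solution (M bstar S0 I0 : R) (g : R -> R) (S I : R -> R) : Prop :=
  exists dS dI : R -> R,
    deriv_on_nonneg S dS /\ deriv_on_nonneg I dI /\
    cont_on_nonneg dS /\ cont_on_nonneg dI /\
    S 0 = S0 /\ I 0 = I0 /\
    (forall t, 0 <= t -> dI t = bstar * (M - I t) * (I t - conv g I t)) /\
    (forall t, 0 <= t -> dS t = - bstar * S t * (I t - conv g I t)).

(* Main.v *)
Require Import Defs.
From Stdlib Require Import Reals Lra Lia Classical.
From Coquelicot Require Import Coquelicot.
Open Scope R_scope.


Lemma ball_R (x e y : R) : ball x e y <-> Rabs (y - x) < e.
Proof. reflexivity. Qed.

Lemma locally_R (x : R) (P : R -> Prop) :
  locally x P <-> exists d : posreal, forall y, Rabs (y - x) < d -> P y.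
Proof. reflexivity. Qed.

Lemma lip_continuous (f : R -> R) (L x : R) : 0 <= L ->
  (forall a b, Rabs (f a - f b) <= L * Rabs (a - b)) -> continuous f x.
Proof.
  intros HL Hf. apply filterlim_locally. intros eps.
  assert (Hp : 0 < eps / (L + 1)) by (apply Rdiv_lt_0_compat; [apply cond_pos|lra]).
  exists (mkposreal _ Hp). intros y Hy. apply ball_R in Hy. apply ball_R. simpl in Hy.
  eapply Rle_lt_trans. apply Hf.
  pose proof (Rabs_pos (y - x)).
  apply Rle_lt_trans with ((L+1) * Rabs (y - x)). revert H. generalize (Rabs (y - x)). intros r Hr. clear -HL Hr. nra.
  apply Rlt_le_trans with ((L+1) * (eps / (L+1))).
  apply Rmult_lt_compat_l. lra. exact Hy. right. field. lra.
Qed.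

Lemma Rmax0_lip a b : Rabs (Rmax 0 a - Rmax 0 b) <= Rabs (a - b).
Proof. unfold Rmax; destruct (Rle_dec 0 a); destruct (Rle_dec 0 b); unfold Rabs; repeat destruct Rcase_abs; lra. Qed.

Lemma Rmax0_pos a : 0 <= a -> Rmax 0 a = a.
Proof. intros; unfold Rmax; destruct Rle_dec; lra. Qed.

Lemma Rmax0_ge a : 0 <= Rmax 0 a.
Proof. apply Rmax_l. Qed.

Lemma deriv_interior f f' t : deriv_on_nonneg f f' -> 0 < t -> is_derive f t (f' t).
Proof.
  intros H Ht. apply is_derive_Reals. intros eps Heps.
  specialize (H t (Rlt_le _ _ Ht)).
  apply filterlim_locally with (eps := mkposreal _ Heps) in H.
  destruct H as [d Hd].
  assert (Hm : 0 < Rmin d t) by (apply Rmin_pos; [apply cond_pos|lra]).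
  exists (mkposreal _ Hm). intros h Hh0 Hh. simpl in Hh.
  assert (Hh1 : Rabs (h - 0) < d). { rewrite Rminus_0_r. eapply Rlt_le_trans. apply Hh. apply Rmin_l. }
  specialize (Hd h Hh1). apply Hd. split. auto.
  assert (Rabs h < t) by (eapply Rlt_le_trans; [apply Hh| apply Rmin_r]).
  revert H. unfold Rabs; destruct Rcase_abs; lra.
Qed.

Lemma deriv_cont f f' : deriv_on_nonneg f f' -> cont_on_nonneg f.
Proof.
  intros H t Ht. apply filterlim_locally. intros eps.
  specialize (H t Ht).
  apply filterlim_locally with (eps := mkposreal _ Rlt_0_1) in H.
  destruct H as [d Hd].
  assert (Hm : 0 < Rmin d (eps / (Rabs (f' t) + 1))).
  { apply Rmin_pos. apply cond_pos. apply Rdiv_lt_0_compat. apply cond_pos. pose proof (Rabs_pos (f' t)). lra. }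
  exists (mkposreal _ Hm). intros s Hs Hs0. simpl in Hs.
  change (Rabs (s - t) < Rmin d (eps / (Rabs (f' t) + 1))) in Hs.
  apply ball_R.
  destruct (Req_dec s t) as [->|Hst].
  { rewrite Rminus_diag, Rabs_R0. apply cond_pos. }
  set (h := s - t).
  assert (Hh1 : Rabs (h - 0) < d). { rewrite Rminus_0_r. eapply Rlt_le_trans. apply Hs. apply Rmin_l. }
  specialize (Hd h Hh1).
  assert (Hq : Rabs ((f (t + h) - f t) / h - f' t) < 1).
  { apply Hd. split. unfold h; lra. unfold h; lra. }
  unfold h in Hq; rewrite Rplus_minus in Hq; fold h in Hq.
  assert (Hh0 : h <> 0) by (unfold h; lra).
  replace (f s - f t) with (h * ((f s - f t) / h)) by (field; auto).
  rewrite Rabs_mult.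
  assert (Rabs ((f s - f t) / h) <= Rabs (f' t) + 1).
  { replace ((f s - f t) / h) with (((f s - f t) / h - f' t) + f' t) by ring.
    eapply Rle_trans. apply Rabs_triang. lra. }
  assert (Rabs h < eps / (Rabs (f' t) + 1)) by (eapply Rlt_le_trans; [apply Hs| apply Rmin_r]).
  pose proof (Rabs_pos h). pose proof (Rabs_pos (f' t)).
  apply Rle_lt_trans with (Rabs h * (Rabs (f' t) + 1)).
  apply Rmult_le_compat_l; lra.
  apply Rlt_le_trans with (eps / (Rabs (f' t) + 1) * (Rabs (f' t) + 1)).
  apply Rmult_lt_compat_r; lra. right. field. lra.
Qed.

Lemma cont_clamp f t : cont_on_nonneg f -> continuous (fun s => f (Rmax 0 s)) t.
Proof.
  intros H. specialize (H (Rmax 0 t) (Rmax0_ge t)).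
  apply filterlim_locally. intros eps.
  apply filterlim_locally with (eps := eps) in H.
  destruct H as [d Hd]. exists d. intros s Hs.
  apply Hd. 2: apply Rmax0_ge.
  change (Rabs (Rmax 0 s - Rmax 0 t) < d). eapply Rle_lt_trans. apply Rmax0_lip. exact Hs.
Qed.

Lemma derive_to_within f F f' : (forall t, 0 <= t -> f t = F t) ->
  (forall t, 0 <= t -> is_derive F t (f' t)) -> deriv_on_nonneg f f'.
Proof.
  intros Hf HF t Ht. apply filterlim_locally. intros eps.
  specialize (HF t Ht). apply is_derive_Reals in HF.
  destruct (HF eps (cond_pos eps)) as [d Hd].
  exists d. intros h Hh [Hh0 Hth]. change (Rabs (h - 0) < d) in Hh. rewrite Rminus_0_r in Hh.
  apply ball_R. rewrite !Hf by lra. apply Hd; auto.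
Qed.

Lemma lip_cont_on f L : 0 <= L ->
  (forall x y, 0 <= x -> 0 <= y -> Rabs (f x - f y) <= L * Rabs (x - y)) -> cont_on_nonneg f.
Proof.
  intros HL Hf t Ht. apply filterlim_locally. intros eps.
  assert (Hp : 0 < eps / (L + 1)) by (apply Rdiv_lt_0_compat; [apply cond_pos|lra]).
  exists (mkposreal _ Hp). intros y Hy Hy0. change (Rabs (y - t) < eps / (L + 1)) in Hy. apply ball_R.
  eapply Rle_lt_trans. apply Hf; auto.
  pose proof (Rabs_pos (y - t)).
  apply Rle_lt_trans with ((L+1) * Rabs (y - t)). rewrite Rmult_plus_distr_r. lra.
  apply Rlt_le_trans with ((L+1) * (eps / (L+1))).
  apply Rmult_lt_compat_l. lra. exact Hy. right. field. lra.
Qed.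

Lemma cont_of_ex_derive (f : R -> R) x : ex_derive f x -> continuous f x.
Proof. intros H. apply (ex_derive_continuous (K:=R_AbsRing) (V:=R_NormedModule)). exact H. Qed.

Lemma ex_RInt_cont (f : R -> R) a b : (forall x, continuous f x) -> ex_RInt f a b.
Proof. intros H. apply (ex_RInt_continuous (V:=R_CompleteNormedModule)). intros; apply H. Qed.

Lemma RInt_abs_bound (f h : R -> R) a b : a <= b -> ex_RInt f a b -> ex_RInt h a b ->
  (forall x, a < x < b -> Rabs (f x) <= h x) -> Rabs (RInt f a b) <= RInt h a b.
Proof.
  intros Hab Hf Hh Hb. eapply Rle_trans. apply abs_RInt_le; auto.
  apply RInt_le; auto. apply (ex_RInt_norm f a b Hf).
Qed.

Lemma cont_exp x : continuity_pt exp x.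
Proof. apply derivable_continuous_pt. apply derivable_pt_exp. Qed.

Lemma RInt_reflect (f : R -> R) t : ex_RInt f 0 t -> ex_RInt (fun y => f (t - y)) 0 t ->
  RInt (fun y => f (t - y)) 0 t = RInt f 0 t.
Proof.
  intros Hf Hex.
  assert (H := RInt_comp_lin (V:=R_CompleteNormedModule) f (-1) t 0 t).
  replace (-1 * 0 + t) with t in H by ring. replace (-1 * t + t) with 0 in H by ring.
  specialize (H (ex_RInt_swap _ _ _ Hf)).
  assert (H2 := opp_RInt_swap (V:=R_CompleteNormedModule) f 0 t Hf).
  assert (H3 := RInt_scal (V:=R_CompleteNormedModule) (fun y => f (t - y)) 0 t (-1) Hex).
  unfold scal, opp in H, H2, H3; simpl in H, H2, H3; unfold mult in H, H3; simpl in H, H3.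
  rewrite (RInt_ext (fun y => -1 * f (-1 * y + t)) (fun y => -1 * f (t - y))) in H.
  2:{ intros y _. replace (-1 * y + t) with (t - y) by ring. reflexivity. }
  rewrite H3 in H. rewrite <- H2 in H. lra.
Qed.

Lemma RInt_mulr (f : R -> R) c a b : ex_RInt f a b -> RInt (fun x => f x * c) a b = RInt f a b * c.
Proof.
  intros Hf. assert (H := RInt_scal (V:=R_CompleteNormedModule) f a b c Hf).
  unfold scal in H; simpl in H; unfold mult in H; simpl in H.
  rewrite Rmult_comm, <- H. apply RInt_ext. intros; apply Rmult_comm.
Qed.

Lemma RInt_minus' (f h : R -> R) a b : ex_RInt f a b -> ex_RInt h a b ->
  RInt (fun x => f x - h x) a b = RInt f a b - RInt h a b.
Proof.
  intros Hf Hh. assert (H := RInt_minus (V:=R_CompleteNormedModule) f h a b Hf Hh).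
  unfold minus, plus, opp in H; simpl in H. unfold plus in H; simpl in H. exact H.
Qed.

Lemma RInt_Chasles' (f : R -> R) a b c : ex_RInt f a b -> ex_RInt f b c ->
  RInt f a b + RInt f b c = RInt f a c.
Proof.
  intros Hf Hh. assert (H := RInt_Chasles (V:=R_CompleteNormedModule) f a b c Hf Hh).
  unfold plus in H; simpl in H. exact H.
Qed.

Lemma RInt_const' c a b : RInt (fun _ => c) a b = (b - a) * c.
Proof. rewrite RInt_const. reflexivity. Qed.

Lemma RInt_point' (f : R -> R) a : RInt f a a = 0.
Proof. rewrite RInt_point. reflexivity. Qed.

Lemma ex_RInt_minus' (f h : R -> R) a b : ex_RInt f a b -> ex_RInt h a b -> ex_RInt (fun x => f x - h x) a b.
Proof.
  intros Hf Hh. apply (ex_RInt_ext (fun x => minus (f x) (h x))). intros; reflexivity.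
  apply (ex_RInt_minus (V:=R_NormedModule)); auto.
Qed.

Lemma deriv_clamp f f' c : deriv_on_nonneg f f' -> 0 < c -> is_derive (fun s => f (Rmax 0 s)) c (f' c).
Proof.
  intros Hd Hc. apply (is_derive_ext_loc f). exists (mkposreal _ Hc). intros s Hs. change (Rabs (s - c) < c) in Hs.
  rewrite Rmax0_pos. reflexivity. revert Hs. unfold Rabs; destruct Rcase_abs; lra.
  apply deriv_interior; auto.
Qed.

Lemma energy (V dV : R -> R) (C t : R) : 0 <= t ->
  (forall c, 0 < c < t -> is_derive V c (dV c)) ->
  (forall c, 0 <= c <= t -> continuity_pt V c) ->
  (forall c, 0 < c < t -> dV c <= C * V c) ->
  V 0 = 0 -> 0 <= V t -> V t = 0.
Proof.
  intros Ht Hd Hc Hle H0 Hpos.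
  set (F := fun s => exp (- C * s) * V s).
  set (dF := fun s => match Rlt_dec 0 s with left _ => match Rlt_dec s t with left _ =>
                     exp (- C * s) * (dV s - C * V s) | right _ => 0 end | right _ => 0 end).
  destruct (MVT_gen F 0 t dF) as [c [_ Hc']].
  - intros x Hx. rewrite Rmin_left, Rmax_right in Hx by lra. unfold dF.
    destruct (Rlt_dec 0 x); [|lra]. destruct (Rlt_dec x t); [|lra].
    unfold F. apply (is_derive_ext (fun s => exp (- C * s) * V s)). reflexivity.
    replace (exp (- C * x) * (dV x - C * V x)) with ((- C) * exp (- C * x) * V x + exp (- C * x) * dV x) by ring.
    apply is_derive_Reals. apply (derivable_pt_lim_mult (fun s => exp (- C * s)) V x).
    apply is_derive_Reals. auto_derive. auto. ring.
    apply is_derive_Reals. apply Hd. lra.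
  - intros x Hx. rewrite Rmin_left, Rmax_right in Hx by lra. unfold F.
    apply continuity_pt_filterlim. apply (continuous_mult (K:=R_AbsRing) (fun s => exp (- C * s)) V).
    apply cont_of_ex_derive. auto_derive. auto.
    apply continuity_pt_filterlim. apply Hc. lra.
  - assert (HdF : dF c <= 0).
    { unfold dF. destruct (Rlt_dec 0 c); [|lra]. destruct (Rlt_dec c t); [|lra].
      pose proof (exp_pos (- C * c)). specialize (Hle c (conj r r0)). nra. }
    unfold F in Hc'. rewrite H0, Rmult_0_r in Hc'.
    pose proof (exp_pos (- C * t)).
    assert (exp (- C * t) * V t <= 0) by nra.
    nra.
Qed.

Lemma hd_add (p q : R -> R) x dp dq : is_derive p x dp -> is_derive q x dq -> is_derive (fun s => p s + q s) x (dp + dq).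
Proof. intros Hp Hq. apply is_derive_Reals. apply (derivable_pt_lim_plus p q); apply is_derive_Reals; auto. Qed.

Lemma hd_sub (p q : R -> R) x dp dq : is_derive p x dp -> is_derive q x dq -> is_derive (fun s => p s - q s) x (dp - dq).
Proof. intros Hp Hq. apply is_derive_Reals. apply (derivable_pt_lim_minus p q); apply is_derive_Reals; auto. Qed.

Lemma hd_mul (p q : R -> R) x dp dq : is_derive p x dp -> is_derive q x dq -> is_derive (fun s => p s * q s) x (dp * q x + p x * dq).
Proof. intros Hp Hq. apply is_derive_Reals. apply (derivable_pt_lim_mult p q); apply is_derive_Reals; auto. Qed.

Lemma hd_const (c x : R) : is_derive (fun _ => c) x 0.
Proof. apply is_derive_Reals. apply derivable_pt_lim_const. Qed.

Lemma hc_add (p q : R -> R) x : continuous p x -> continuous q x -> continuous (fun s => p s + q s) x.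
Proof. intros. apply (continuous_plus (V:=R_NormedModule) p q); auto. Qed.

Lemma hc_sub (p q : R -> R) x : continuous p x -> continuous q x -> continuous (fun s => p s - q s) x.
Proof. intros. apply (continuous_minus (V:=R_NormedModule) p q); auto. Qed.

Lemma hc_mul (p q : R -> R) x : continuous p x -> continuous q x -> continuous (fun s => p s * q s) x.
Proof. intros. apply (continuous_mult (K:=R_AbsRing) p q); auto. Qed.

Lemma Rabs_sub_le a b : Rabs (a - b) <= Rabs a + Rabs b.
Proof. unfold Rminus. eapply Rle_trans. apply Rabs_triang. rewrite Rabs_Ropp. lra. Qed.

Lemma mono_lim (f : R -> R) B : (forall t t', 0 <= t <= t' -> f t <= f t') -> (forall t, 0 <= t -> f t <= B) ->
  exists l, l <= B /\ (forall eps : posreal, exists T, forall t, T < t -> Rabs (f t - l) < eps).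
Proof.
  intros Hmon HB.
  set (E := fun y => exists t, 0 <= t /\ y = f t).
  destruct (completeness E) as [l [Hub Hlub]].
  - exists B. intros y [t [Ht ->]]. apply HB; auto.
  - exists (f 0). exists 0. split; lra.
  - exists l. split. apply Hlub. intros y [t [Ht ->]]. apply HB; auto.
    intros eps. destruct (classic (exists t0, 0 <= t0 /\ l - eps < f t0)) as [[t0 [Ht0 Hlt]]|Hno].
    + exists t0. intros t Ht. assert (f t0 <= f t) by (apply Hmon; lra).
      assert (f t <= l) by (apply Hub; exists t; split; [lra|auto]).
      rewrite Rabs_left1 by lra. lra.
    + exfalso. assert (l <= l - eps).
      { apply Hlub. intros y [t [Ht ->]]. destruct (Rle_dec (f t) (l - eps)); auto. exfalso. apply Hno. exists t. split; auto. lra. }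
      pose proof (cond_pos eps). lra.
Qed.

Lemma eps_is_lim (f : R -> R) (l : R) : (forall eps : posreal, exists T, forall t, T < t -> Rabs (f t - l) < eps) ->
  is_lim f p_infty l.
Proof. intros H. apply is_lim_spec. intros eps. destruct (H eps) as [T HT]. exists T. auto. Qed.


Section G.
Variables mu sigma : R.
Hypothesis Hs : 0 < sigma.
Let g := lognormal mu sigma.
Definition c0 := / (sigma * sqrt (2 * PI)).
Definition K0 := sigma ^ 2 / 2 - mu.
Definition Gmax := c0 * exp K0.

Lemma sp_pos : 0 < sqrt (2 * PI).
Proof. apply sqrt_lt_R0. pose proof PI_RGT_0. lra. Qed.

Lemma c0_pos : 0 < c0.
Proof. unfold c0. apply Rinv_0_lt_compat. apply Rmult_lt_0_compat. auto. apply sp_pos. Qed.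

Lemma g_neg t : t <= 0 -> g t = 0.
Proof. intros. unfold g, lognormal. destruct Rlt_dec; lra. Qed.

Lemma g_pos_formula t : 0 < t ->
  g t = / (t * sigma * sqrt (2 * PI)) * exp (- (ln t - mu) ^ 2 / (2 * sigma ^ 2)).
Proof. intros. unfold g, lognormal. destruct Rlt_dec; lra. Qed.

Lemma g_expr t : 0 < t ->
  g t = c0 * exp (K0 - (ln t - mu + sigma ^ 2) ^ 2 / (2 * sigma ^ 2)).
Proof.
  intros Ht. rewrite g_pos_formula by auto. unfold c0, K0.
  replace (/ (t * sigma * sqrt (2 * PI))) with (/ (sigma * sqrt (2 * PI)) * exp (- ln t)).
  2:{ rewrite exp_Ropp, exp_ln by auto. pose proof sp_pos. field. repeat split; lra. }
  rewrite Rmult_assoc, <- exp_plus. f_equal. f_equal. field. lra.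
Qed.

Lemma g_nonneg t : 0 <= g t.
Proof.
  destruct (Rle_dec t 0). rewrite g_neg; lra.
  rewrite g_expr by lra. pose proof c0_pos. pose proof (exp_pos (K0 - (ln t - mu + sigma ^ 2) ^ 2 / (2 * sigma ^ 2))). nra.
Qed.

Lemma Gmax_pos : 0 < Gmax.
Proof. unfold Gmax. pose proof c0_pos. pose proof (exp_pos K0). nra. Qed.

Lemma g_le t : g t <= Gmax.
Proof.
  destruct (Rle_dec t 0). rewrite g_neg by lra. pose proof Gmax_pos; lra.
  rewrite g_expr by lra. unfold Gmax. apply Rmult_le_compat_l. pose proof c0_pos; lra.
  destruct (Req_dec (K0 - (ln t - mu + sigma ^ 2) ^ 2 / (2 * sigma ^ 2)) K0) as [->|Hne]. lra.
  left. apply exp_increasing.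
  assert (0 <= (ln t - mu + sigma ^ 2) ^ 2 / (2 * sigma ^ 2)).
  { apply Rdiv_le_0_compat. apply pow2_ge_0. nra. }
  lra.
Qed.

Lemma g_cont t : continuous g t.
Proof.
  destruct (Rlt_le_dec 0 t) as [Ht|Ht].
  - apply continuous_ext_loc with (g := fun x => / (x * sigma * sqrt (2 * PI)) * exp (- (ln x - mu) ^ 2 / (2 * sigma ^ 2))).
    + exists (mkposreal _ Ht). intros y Hy. change (Rabs (y - t) < t) in Hy.
      rewrite g_pos_formula. auto. revert Hy. unfold Rabs; destruct Rcase_abs; lra.
    + apply (ex_derive_continuous (K:=R_AbsRing) (V:=R_NormedModule)). pose proof sp_pos. auto_derive. repeat split; try lra.
      intro H0. apply Rmult_integral in H0. destruct H0 as [H0|H0]. apply Rmult_integral in H0. lra. lra.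
  - destruct Ht as [Ht|Ht].
    + apply continuous_ext_loc with (g := fun _ => 0).
      * assert (Hp : 0 < - t) by lra. exists (mkposreal _ Hp). intros y Hy. change (Rabs (y - t) < - t) in Hy.
        rewrite g_neg. auto. revert Hy. unfold Rabs; destruct Rcase_abs; lra.
      * apply continuous_const.
    + subst t. apply filterlim_locally. intros eps.
      pose proof c0_pos as Hc0.
      set (R0 := 1 + 2 * sigma ^ 2 * Rabs (K0 - ln (eps / c0))).
      assert (HR0 : 1 <= R0). { unfold R0. pose proof (Rabs_pos (K0 - ln (eps / c0))). assert (0 < sigma ^ 2) by nra. nra. }
      exists (mkposreal _ (exp_pos (mu - sigma ^ 2 - R0))). intros s Hs1. change (Rabs (s - 0) < exp (mu - sigma ^ 2 - R0)) in Hs1.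
      apply ball_R. rewrite (g_neg 0) by lra. rewrite Rminus_0_r in *.
      destruct (Rle_dec s 0). rewrite g_neg by auto. rewrite Rabs_R0. apply cond_pos.
      assert (Hs0 : 0 < s) by lra. rewrite Rabs_pos_eq in Hs1 by lra.
      rewrite g_expr by auto. rewrite Rabs_pos_eq.
      2:{ pose proof (exp_pos (K0 - (ln s - mu + sigma ^ 2) ^ 2 / (2 * sigma ^ 2))). nra. }
      assert (Hl : ln s < mu - sigma ^ 2 - R0).
      { rewrite <- (ln_exp (mu - sigma ^ 2 - R0)). apply ln_increasing; auto. }
      set (w := ln s - mu + sigma ^ 2) in *.
      assert (Hw : R0 <= w ^ 2). { assert (w < - R0) by (unfold w; lra). nra. }
      assert (Hex : K0 - w ^ 2 / (2 * sigma ^ 2) < ln (eps / c0)).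
      { assert (Hsig : 0 < 2 * sigma ^ 2) by nra.
        assert (R0 / (2 * sigma ^ 2) <= w ^ 2 / (2 * sigma ^ 2)).
        { unfold Rdiv. apply Rmult_le_compat_r. left; apply Rinv_0_lt_compat; auto. auto. }
        assert (R0 / (2 * sigma ^ 2) = / (2 * sigma ^ 2) + Rabs (K0 - ln (eps / c0))).
        { unfold R0. field. lra. }
        pose proof (Rinv_0_lt_compat _ Hsig).
        assert (K0 - ln (eps / c0) <= Rabs (K0 - ln (eps / c0))) by apply Rle_abs.
        lra. }
      apply exp_increasing in Hex. rewrite exp_ln in Hex.
      2:{ apply Rdiv_lt_0_compat; auto. apply cond_pos. }
      replace (pos eps) with (c0 * (eps / c0)) by (field; lra).
      apply Rmult_lt_compat_l; auto.
Qed.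

End G.


Definition gauss (z : R) := exp (- (z * z)).
Definition Eg (x : R) := RInt gauss 0 x.

Lemma gauss_cont x : continuous gauss x.
Proof. apply cont_of_ex_derive. unfold gauss. auto_derive. auto. Qed.

Lemma gauss_ex a b : ex_RInt gauss a b.
Proof. apply ex_RInt_cont. apply gauss_cont. Qed.

Lemma Eg_derive x : is_derive Eg x (gauss x).
Proof.
  apply (is_derive_RInt (V:=R_NormedModule) gauss Eg 0 x).
  exists (mkposreal _ Rlt_0_1). intros y _. apply (RInt_correct (V:=R_CompleteNormedModule)). apply gauss_ex.
  apply gauss_cont.
Qed.

Definition uf (x t : R) := exp (- (x * x) * (1 + t * t)) / (1 + t * t).
Definition U (x : R) := RInt (fun t => uf x t) 0 1.

Lemma one_t2 t : 0 < 1 + t * t.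
Proof. nra. Qed.

Lemma uf_derive x t : is_derive (fun u => uf u t) x (-2 * x * exp (- (x * x) * (1 + t * t))).
Proof.
  unfold uf. pose proof (one_t2 t). auto_derive. lra. field. lra.
Qed.

Lemma U_derive x : is_derive U x (RInt (fun t => -2 * x * exp (- (x * x) * (1 + t * t))) 0 1).
Proof.
  assert (H := is_derive_RInt_param uf 0 1 x).
  replace (RInt (fun t => -2 * x * exp (- (x * x) * (1 + t * t))) 0 1)
    with (RInt (fun t : R => Derive (fun u : R => uf u t) x) 0 1).
  apply H.
  - exists (mkposreal _ Rlt_0_1). intros y _ t _. eexists. apply uf_derive.
  - intros t _. apply continuity_2d_pt_ext with (f := fun u v => -2 * u * exp (- (u * u) * (1 + v * v))).
    intros u v. symmetry. apply is_derive_unique. apply uf_derive.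
    apply continuity_2d_pt_mult.
    apply continuity_2d_pt_mult. apply continuity_2d_pt_const. apply continuity_2d_pt_id1.
    apply continuity_1d_2d_pt_comp with (f := exp) (g := fun u v => - (u * u) * (1 + v * v)).
    apply cont_exp.
    apply continuity_2d_pt_mult. apply continuity_2d_pt_opp.
    apply continuity_2d_pt_mult; apply continuity_2d_pt_id1.
    apply continuity_2d_pt_plus. apply continuity_2d_pt_const.
    apply continuity_2d_pt_mult; apply continuity_2d_pt_id2.
  - exists (mkposreal _ Rlt_0_1). intros y _. apply ex_RInt_cont. intros t.
    apply cont_of_ex_derive. unfold uf. auto_derive. pose proof (one_t2 t). lra.
  - apply RInt_ext. intros t _. apply is_derive_unique. apply uf_derive.
Qed.

Lemma U_deriv_val x : RInt (fun t => -2 * x * exp (- (x * x) * (1 + t * t))) 0 1 = -2 * gauss x * Eg x.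
Proof.
  rewrite (RInt_ext _ (fun t => scal (-2 * gauss x) (scal x (gauss (x * t + 0))))).
  2:{ intros t _. unfold scal; simpl; unfold mult; simpl. unfold gauss. 
      replace (x * t + 0) with (x * t) by ring.
      replace (-2 * exp (- (x * x)) * (x * exp (- (x * t * (x * t))))) with (-2 * x * (exp (- (x * x)) * exp (- (x * t * (x * t))))) by ring.
      rewrite <- exp_plus. f_equal. f_equal. ring. }
  rewrite (RInt_scal (V:=R_CompleteNormedModule) (fun t => scal x (gauss (x * t + 0)))).  
  2:{ apply ex_RInt_cont. intros t. apply cont_of_ex_derive. unfold gauss, scal; simpl; unfold mult; simpl. auto_derive. auto. }
  assert (HH := RInt_comp_lin (V:=R_CompleteNormedModule) gauss x 0 0 1 (gauss_ex _ _)).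
  unfold scal in *; simpl in *; unfold mult in *; simpl in *. rewrite HH.
  unfold scal; simpl; unfold mult; simpl. unfold Eg. f_equal. f_equal; ring.
Qed.

Definition hg (x : R) := Eg x ^ 2 + U x.

Lemma hg_derive x : is_derive hg x 0.
Proof.
  unfold hg. auto_derive.
  - split. eexists; apply Eg_derive. split. eexists; apply U_derive. auto.
    replace (Derive (fun x0 : R => Eg x0) x) with (gauss x) by (symmetry; apply is_derive_unique; apply Eg_derive).
    replace (Derive (fun x0 : R => U x0) x) with (RInt (fun t => -2 * x * exp (- (x * x) * (1 + t * t))) 0 1) by (symmetry; apply is_derive_unique; apply U_derive).
    rewrite U_deriv_val. ring.
Qed.

Lemma hg_const x : hg x = hg 0.
Proof.
  destruct (MVT_gen hg 0 x (fun _ => 0)) as [c [_ Hc]].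
  - intros; apply hg_derive.
  - intros y _. apply continuity_pt_filterlim. apply cont_of_ex_derive. eexists. apply hg_derive.
  - lra.
Qed.

Lemma hg0 : hg 0 = PI / 4.
Proof.
  unfold hg, Eg. rewrite RInt_point. unfold zero; simpl.
  unfold U. rewrite (RInt_ext _ (fun t => / (1 + t ^ 2))).
  2:{ intros t _. unfold uf. replace (- (0 * 0) * (1 + t * t)) with 0 by ring. rewrite exp_0. simpl. field. nra. }
  rewrite (is_RInt_unique _ 0 1 (minus (atan 1) (atan 0))).
  rewrite atan_1, atan_0. unfold minus, plus, opp; simpl. ring.
  apply (is_RInt_derive (V:=R_CompleteNormedModule)).
  intros y _. apply is_derive_Reals. apply derivable_pt_lim_atan.
  intros y _. apply cont_of_ex_derive. auto_derive. nra.
Qed.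

Lemma U_bounds x : 0 <= U x <= exp (- (x * x)).
Proof.
  assert (Hex : ex_RInt (fun t => uf x t) 0 1).
  { apply ex_RInt_cont. intros t. apply cont_of_ex_derive. unfold uf. auto_derive. pose proof (one_t2 t). lra. }
  split.
  - apply RInt_ge_0. lra. auto. intros t _. unfold uf. pose proof (one_t2 t). pose proof (exp_pos (- (x * x) * (1 + t * t))).
    apply Rdiv_le_0_compat; lra.
  - apply Rle_trans with (RInt (fun _ => exp (- (x * x))) 0 1).
    apply RInt_le. lra. auto. apply ex_RInt_const.
    intros t Ht. unfold uf. pose proof (one_t2 t).
    assert (exp (- (x * x) * (1 + t * t)) <= exp (- (x * x))).
    { destruct (Req_dec (x * x * t * t) 0).
      right. f_equal. nra. left. apply exp_increasing. assert (0 <= x * x * t * t) by (apply Rmult_le_pos; [nra|nra]). nra. }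
    pose proof (exp_pos (- (x * x) * (1 + t * t))).
    unfold Rdiv. apply Rle_trans with (exp (- (x * x) * (1 + t * t)) * 1).
    apply Rmult_le_compat_l. lra. rewrite <- Rinv_1. apply Rinv_le_contravar. lra. nra. lra.
    rewrite RInt_const. unfold scal; simpl; unfold mult; simpl. lra.
Qed.

Lemma Eg_nonneg x : 0 <= x -> 0 <= Eg x.
Proof.
  intros Hx. destruct Hx as [Hx| <-]. apply RInt_ge_0. lra. apply gauss_ex. intros; unfold gauss. left; apply exp_pos.
  unfold Eg. rewrite RInt_point. unfold zero; simpl; lra.
Qed.

Lemma Eg_sq x : Eg x ^ 2 = PI / 4 - U x.
Proof. pose proof (hg_const x). rewrite hg0 in H. unfold hg in H. lra. Qed.

Lemma sqrtPI_sq : sqrt PI * sqrt PI = PI.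
Proof. apply sqrt_sqrt. pose proof PI_RGT_0. lra. Qed.

Lemma sqrtPI_pos : 0 < sqrt PI.
Proof. apply sqrt_lt_R0. apply PI_RGT_0. Qed.

Lemma gauss_tail x : 0 <= x -> 0 <= sqrt PI / 2 - Eg x <= 2 / sqrt PI * exp (- (x * x)).
Proof.
  intros Hx. pose proof (Eg_nonneg x Hx). pose proof (Eg_sq x). pose proof (U_bounds x).
  pose proof sqrtPI_sq. pose proof sqrtPI_pos.
  set (a := sqrt PI / 2) in *. set (e := Eg x) in *.
  assert (Ha : a * a = PI / 4) by (unfold a; nra).
  assert (Hk : (a - e) * (a + e) = U x) by (simpl in *; nra).
  assert (Ha0 : 0 < a) by (unfold a; lra).
  assert (Hae : 0 <= a - e).
  { destruct (Rle_dec 0 (a - e)); auto. exfalso. assert ((a - e) * (a + e) < 0). apply Rmult_neg_pos; lra. lra. }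
  split; auto.
  assert ((a - e) * a <= exp (- (x * x))) by nra.
  replace (2 / sqrt PI) with (/ a) by (unfold a; field; lra).
  apply Rmult_le_reg_r with a. auto. replace (/ a * exp (- (x * x)) * a) with (exp (- (x * x))) by (field; lra). lra.
Qed.

Lemma Eg_odd x : Eg (- x) = - Eg x.
Proof.
  unfold Eg.
  assert (H := RInt_comp_lin (V:=R_CompleteNormedModule) gauss (-1) 0 0 x (gauss_ex _ _)).
  assert (H2 := RInt_opp (V:=R_CompleteNormedModule) gauss 0 x (gauss_ex _ _)).
  unfold scal, opp in *; simpl in *; unfold mult in *; simpl in *.
  replace (-1 * 0 + 0) with 0 in H by ring. replace (-1 * x + 0) with (- x) in H by ring.
  rewrite <- H, <- H2. apply RInt_ext. intros y _. unfold gauss.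
  replace (-1 * y + 0) with (- y) by ring. replace (- y * - y) with (y * y) by ring. change (-1 * exp (- (y * y)) = - exp (- (y * y))). ring.
Qed.

Lemma Eg_le x : Eg x <= sqrt PI / 2.
Proof.
  destruct (Rle_dec 0 x). pose proof (gauss_tail x r). lra.
  replace x with (- - x) by ring. rewrite Eg_odd. pose proof (Eg_nonneg (- x)). pose proof sqrtPI_pos. lra.
Qed.

Lemma Eg_ge x : - (sqrt PI / 2) <= Eg x.
Proof.
  destruct (Rle_dec 0 x). pose proof (Eg_nonneg x r). pose proof sqrtPI_pos. lra.
  replace x with (- - x) by ring. rewrite Eg_odd. pose proof (Eg_le (- x)). lra.
Qed.

Lemma Derive_Eg y : Derive (fun x : R => Eg x) y = gauss y.
Proof. apply is_derive_unique. apply Eg_derive. Qed.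


Section GI.
Variables mu sigma : R.
Hypothesis Hs : 0 < sigma.
Let g := lognormal mu sigma.

Definition xt (t : R) := (ln t - mu) / (sigma * sqrt 2).
Definition PhiG (t : R) := / 2 + Eg (xt t) / sqrt PI.

Lemma sqrt2_pos : 0 < sqrt 2.
Proof. apply sqrt_lt_R0. lra. Qed.

Lemma g_cont' t : continuous g t.
Proof. apply g_cont. auto. Qed.

Lemma g_ex a b : ex_RInt g a b.
Proof. apply ex_RInt_cont. apply g_cont'. Qed.

Lemma PhiG_derive t : 0 < t -> is_derive PhiG t (g t).
Proof.
  intros Ht. unfold PhiG, xt. pose proof sqrt2_pos. pose proof sqrtPI_pos.
  auto_derive.
  - repeat split; auto. eexists. apply Eg_derive.
  - rewrite Derive_Eg. unfold g. rewrite g_pos_formula by auto. unfold gauss.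
    rewrite sqrt_mult by (try lra; pose proof PI_RGT_0; lra).
    replace (ln t + - mu) with (ln t - mu) by ring. fold (Rdiv (ln t - mu) (sigma * sqrt 2)).
    assert (E2 : (ln t - mu) / (sigma * sqrt 2) * ((ln t - mu) / (sigma * sqrt 2)) = (ln t - mu) ^ 2 / (2 * sigma ^ 2)).
    { assert (sqrt 2 * sqrt 2 = 2) by (apply sqrt_sqrt; lra).
      assert (H2 : / sqrt 2 * / sqrt 2 = / 2) by (rewrite <- Rinv_mult, H1; reflexivity).
      unfold Rdiv. rewrite !Rinv_mult.
      transitivity ((ln t - mu) ^ 2 * / sigma ^ 2 * (/ sqrt 2 * / sqrt 2)). field. lra.
      rewrite H2. field. lra. }
    rewrite E2. replace (- (ln t - mu) ^ 2 / (2 * sigma ^ 2)) with (- ((ln t - mu) ^ 2 / (2 * sigma ^ 2))) by (field; lra). field. repeat split; lra.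
Qed.

Lemma Rint_g_bound a : 0 <= a -> 0 <= RInt g 0 a <= Gmax mu sigma * a.
Proof.
  intros Ha. split.
  apply RInt_ge_0; auto. apply g_ex. intros; apply g_nonneg; auto.
  apply Rle_trans with (RInt (fun _ => Gmax mu sigma) 0 a).
  apply RInt_le; auto. apply g_ex. apply ex_RInt_const. intros; apply g_le; auto.
  rewrite RInt_const. unfold scal; simpl; unfold mult; simpl. lra.
Qed.

Lemma PhiG_small e : 0 < e <= exp mu -> 0 <= PhiG e <= 2 / PI * exp (- (xt e * xt e)).
Proof.
  intros [He1 He2]. unfold PhiG.
  assert (Hx : 0 <= - xt e).
  { unfold xt. pose proof sqrt2_pos. assert (ln e <= mu).
    { destruct He2 as [He2| ->]. left. rewrite <- (ln_exp mu). apply ln_increasing; auto. rewrite ln_exp; lra. }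
    replace (-((ln e - mu)/(sigma*sqrt 2))) with ((mu - ln e)/(sigma*sqrt 2)) by (field; nra).
    apply Rdiv_le_0_compat; nra. }
  pose proof (gauss_tail _ Hx). replace (xt e) with (- - xt e) by ring. rewrite Eg_odd.
  replace (- - xt e * - - xt e) with (- xt e * - xt e) by ring.
  pose proof sqrtPI_pos. pose proof sqrtPI_sq.
  replace (/ 2 + - Eg (- xt e) / sqrt PI) with ((sqrt PI / 2 - Eg (- xt e)) / sqrt PI) by (field; lra).
  split. apply Rdiv_le_0_compat; lra.
  replace (2 / PI * exp (- (- xt e * - xt e))) with ((2 / sqrt PI * exp (- (- xt e * - xt e))) / sqrt PI).
  2:{ assert (H2 : / PI = / sqrt PI * / sqrt PI) by (rewrite <- Rinv_mult, H1; auto). unfold Rdiv. rewrite H2. ring. }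
  unfold Rdiv at 1 3. apply Rmult_le_compat_r. left; apply Rinv_0_lt_compat; lra. lra.
Qed.

Lemma G_formula t : 0 < t -> RInt g 0 t = PhiG t.
Proof.
  intros Ht.
  assert (HD : forall e, 0 < e < t -> RInt g 0 t - PhiG t = RInt g 0 e - PhiG e).
  { intros e He.
    rewrite <- (RInt_Chasles (V:=R_CompleteNormedModule) g 0 e t) by apply g_ex.
    rewrite (is_RInt_unique g e t (minus (PhiG t) (PhiG e))).
    unfold plus, minus, opp; simpl. unfold plus; simpl. ring.
    apply (is_RInt_derive (V:=R_CompleteNormedModule) PhiG g).
    intros x Hx. apply PhiG_derive. rewrite Rmin_left in Hx; lra.
    intros; apply g_cont'. }
  apply Rminus_diag_uniq. apply Rabs_eq_0.
  destruct (Rle_dec (Rabs (RInt g 0 t - PhiG t)) 0) as [Hle|Hgt]. pose proof (Rabs_pos (RInt g 0 t - PhiG t)). lra.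
  exfalso. apply Rnot_le_lt in Hgt. set (eta := Rabs (RInt g 0 t - PhiG t)) in *.
  pose proof (Gmax_pos mu sigma Hs) as HG.
  set (Y0 := Rmax 1 (- ln (eta * PI / 8))).
  set (e := Rmin (t / 2) (Rmin (eta / (2 * Gmax mu sigma)) (exp (mu - sigma * sqrt 2 * Y0)))).
  assert (Hsq := sqrt2_pos).
  assert (He0 : 0 < e). { unfold e. apply Rmin_pos. lra. apply Rmin_pos. apply Rdiv_lt_0_compat; lra. apply exp_pos. }
  assert (He1 : e <= t / 2) by apply Rmin_l.
  assert (He2 : e <= eta / (2 * Gmax mu sigma)) by (eapply Rle_trans; [apply Rmin_r| apply Rmin_l]).
  assert (He3 : e <= exp (mu - sigma * sqrt 2 * Y0)) by (eapply Rle_trans; [apply Rmin_r| apply Rmin_r]).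
  assert (HY0 : 1 <= Y0) by apply Rmax_l.
  assert (HY1 : - ln (eta * PI / 8) <= Y0) by apply Rmax_r.
  assert (He4 : e <= exp mu).
  { eapply Rle_trans. apply He3. destruct (Req_dec (mu - sigma * sqrt 2 * Y0) mu). rewrite H; lra.
    left. apply exp_increasing. assert (0 < sigma * sqrt 2) by nra. nra. }
  assert (Het : e < t) by lra. specialize (HD e (conj He0 Het)).
  pose proof (Rint_g_bound e (Rlt_le _ _ He0)) as [Hb1 Hb2].
  pose proof (PhiG_small e (conj He0 He4)) as [Hp1 Hp2].
  assert (Hxe : Y0 <= - xt e).
  { unfold xt. assert (ln e <= mu - sigma * sqrt 2 * Y0).
    { destruct He3 as [He3| ->]. left. rewrite <- (ln_exp (mu - sigma * sqrt 2 * Y0)). apply ln_increasing; auto. rewrite ln_exp; lra. }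
    replace (- ((ln e - mu) / (sigma * sqrt 2))) with ((mu - ln e) / (sigma * sqrt 2)) by (field; lra).
    apply Rmult_le_reg_r with (sigma * sqrt 2). nra. unfold Rdiv. rewrite Rmult_assoc, Rinv_l. 2: nra. nra. }
  assert (Hexp : exp (- (xt e * xt e)) <= eta * PI / 8).
  { assert (Hq : - (xt e * xt e) <= ln (eta * PI / 8)) by nra.
    destruct Hq as [Hq| ->]. left. rewrite <- (exp_ln (eta * PI / 8)). apply exp_increasing; auto.
    pose proof PI_RGT_0. apply Rdiv_lt_0_compat; nra. rewrite exp_ln. lra. pose proof PI_RGT_0. apply Rdiv_lt_0_compat; nra. }
  assert (HPhi : PhiG e <= eta / 4).
  { eapply Rle_trans. apply Hp2. pose proof PI_RGT_0.
    apply Rle_trans with (2 / PI * (eta * PI / 8)). apply Rmult_le_compat_l. apply Rdiv_le_0_compat; lra. auto.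
    right. field. lra. }
  assert (HR : RInt g 0 e <= eta / 2).
  { eapply Rle_trans. apply Hb2. apply Rle_trans with (Gmax mu sigma * (eta / (2 * Gmax mu sigma))).
    apply Rmult_le_compat_l; lra. right. field. lra. }
  assert (eta = Rabs (RInt g 0 e - PhiG e)) by (unfold eta; rewrite HD; reflexivity).
  assert (Rabs (RInt g 0 e - PhiG e) <= eta * 3 / 4).
  { unfold Rabs; destruct Rcase_abs; lra. }
  lra.
Qed.

Definition Gf (t : R) := RInt g 0 t.

Lemma Gf_derive t : is_derive Gf t (g t).
Proof.
  apply (is_derive_RInt (V:=R_NormedModule) g Gf 0 t).
  exists (mkposreal _ Rlt_0_1). intros y _. apply (RInt_correct (V:=R_CompleteNormedModule)). apply g_ex.
  apply g_cont'.
Qed.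

Lemma Gf_cont t : continuous Gf t.
Proof. apply cont_of_ex_derive. eexists. apply Gf_derive. Qed.

Lemma Gf_nonneg t : 0 <= t -> 0 <= Gf t.
Proof. intros. apply Rint_g_bound; auto. Qed.

Lemma Gf_le1 t : 0 <= t -> Gf t <= 1.
Proof.
  intros [Ht| <-]. unfold Gf. rewrite G_formula by auto. unfold PhiG.
  pose proof (Eg_le (xt t)). pose proof sqrtPI_pos.
  assert (Eg (xt t) / sqrt PI <= / 2).
  { apply Rmult_le_reg_r with (sqrt PI). auto. unfold Rdiv. rewrite Rmult_assoc, Rinv_l by lra. lra. }
  lra.
  unfold Gf. rewrite RInt_point. unfold zero; simpl; lra.
Qed.

Lemma xt_sq u : xt u * xt u = (ln u - mu) ^ 2 / (2 * sigma ^ 2).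
Proof.
  unfold xt. pose proof sqrt2_pos.
  assert (H1 : sqrt 2 * sqrt 2 = 2) by (apply sqrt_sqrt; lra).
  assert (H2 : / sqrt 2 * / sqrt 2 = / 2) by (rewrite <- Rinv_mult, H1; reflexivity).
  unfold Rdiv. rewrite !Rinv_mult.
  transitivity ((ln u - mu) ^ 2 * / sigma ^ 2 * (/ sqrt 2 * / sqrt 2)). field. lra.
  rewrite H2. field. lra.
Qed.

Definition CT := 2 / PI * exp (2 * mu + 2 * sigma ^ 2).

Lemma H_tail u : exp mu <= u -> 1 - Gf u <= CT / u ^ 2.
Proof.
  intros Hu. pose proof (exp_pos mu). assert (Hu0 : 0 < u) by lra.
  unfold Gf. rewrite G_formula by auto. unfold PhiG.
  assert (Hx : 0 <= xt u).
  { unfold xt. pose proof sqrt2_pos. assert (mu <= ln u).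
    { rewrite <- (ln_exp mu). destruct Hu as [Hu| <-]. left; apply ln_increasing; auto. lra. }
    apply Rdiv_le_0_compat; nra. }
  pose proof (gauss_tail _ Hx) as [_ Ht]. pose proof sqrtPI_pos. pose proof sqrtPI_sq.
  assert (Hexp : exp (- (xt u * xt u)) <= exp (2 * mu + 2 * sigma ^ 2) / u ^ 2).
  { replace (exp (2 * mu + 2 * sigma ^ 2) / u ^ 2) with (exp (2 * mu + 2 * sigma ^ 2 - 2 * ln u)).
    2:{ unfold Rminus. rewrite (exp_plus (2 * mu + 2 * sigma ^ 2)). replace (- (2 * ln u)) with (- ln u + - ln u) by ring.
        rewrite (exp_plus (- ln u)), exp_Ropp, exp_ln by auto. field. lra. }
    rewrite xt_sq.
    assert (- ((ln u - mu) ^ 2 / (2 * sigma ^ 2)) <= 2 * mu + 2 * sigma ^ 2 - 2 * ln u).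
    { assert (E : 2 * mu + 2 * sigma ^ 2 - 2 * ln u - - ((ln u - mu) ^ 2 / (2 * sigma ^ 2))
                 = (ln u - mu - 2 * sigma ^ 2) ^ 2 / (2 * sigma ^ 2)) by (field; lra).
      assert (0 <= (ln u - mu - 2 * sigma ^ 2) ^ 2 / (2 * sigma ^ 2)) by (apply Rdiv_le_0_compat; [apply pow2_ge_0 | nra]).
      lra. }
    destruct H2 as [H2| ->]. left; apply exp_increasing; auto. lra. }
  replace (1 - (/ 2 + Eg (xt u) / sqrt PI)) with ((sqrt PI / 2 - Eg (xt u)) / sqrt PI) by (field; lra).
  apply Rle_trans with ((2 / sqrt PI * exp (- (xt u * xt u))) / sqrt PI).
  unfold Rdiv at 1 2. apply Rmult_le_compat_r. left; apply Rinv_0_lt_compat; lra. lra.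
  replace (2 / sqrt PI * exp (- (xt u * xt u)) / sqrt PI) with (2 / PI * exp (- (xt u * xt u))).
  2:{ assert (H2 : / PI = / sqrt PI * / sqrt PI) by (rewrite <- Rinv_mult, H1; auto). unfold Rdiv. rewrite H2. ring. }
  pose proof PI_RGT_0.
  apply Rle_trans with (2 / PI * (exp (2 * mu + 2 * sigma ^ 2) / u ^ 2)).
  apply Rmult_le_compat_l. apply Rdiv_le_0_compat; lra. exact Hexp.
  unfold CT. right. field. lra.
Qed.

Definition CH := exp mu + CT / exp mu.

Lemma Hf_cont u : continuous (fun u => 1 - Gf u) u.
Proof. apply cont_of_ex_derive. auto_derive. eexists. apply Gf_derive. Qed.

Lemma Hf_ex a b : ex_RInt (fun u => 1 - Gf u) a b.
Proof. apply ex_RInt_cont. apply Hf_cont. Qed.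

Lemma Int_H_bound T : 0 <= T -> RInt (fun u => 1 - Gf u) 0 T <= CH.
Proof.
  intros HT. pose proof (exp_pos mu) as Hu1.
  assert (HCT : 0 <= CT). { unfold CT. pose proof PI_RGT_0. pose proof (exp_pos (2 * mu + 2 * sigma ^ 2)). apply Rmult_le_pos. apply Rdiv_le_0_compat; lra. lra. }
  assert (HC2 : 0 <= CT / exp mu) by (apply Rdiv_le_0_compat; lra).
  assert (Hle1 : forall a b, 0 <= a <= b -> RInt (fun u => 1 - Gf u) a b <= b - a).
  { intros a b Hab. apply Rle_trans with (RInt (fun _ => 1) a b).
    apply RInt_le. lra. apply Hf_ex. apply ex_RInt_const. intros x Hx. pose proof (Gf_nonneg x). lra.
    rewrite RInt_const. unfold scal; simpl; unfold mult; simpl. lra. }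
  destruct (Rle_dec T (exp mu)).
  - pose proof (Hle1 0 T). unfold CH. lra.
  - rewrite <- (RInt_Chasles (V:=R_CompleteNormedModule) _ 0 (exp mu) T) by apply Hf_ex.
    unfold plus; simpl. pose proof (Hle1 0 (exp mu)).
    assert (RInt (fun u => 1 - Gf u) (exp mu) T <= CT / exp mu).
    { apply Rle_trans with (RInt (fun u => CT / u ^ 2) (exp mu) T).
      apply RInt_le. lra. apply Hf_ex.
      apply (ex_RInt_continuous (V:=R_CompleteNormedModule)). intros z Hz. rewrite Rmin_left in Hz by lra.
      apply cont_of_ex_derive. auto_derive. nra.
      intros x Hx. apply H_tail. lra.
      rewrite (is_RInt_unique _ (exp mu) T (minus (- CT / T) (- CT / exp mu))).
      unfold minus, plus, opp; simpl. unfold plus; simpl.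
      assert (0 <= CT / T) by (apply Rdiv_le_0_compat; lra). 
      replace (- CT / T + - (- CT / exp mu)) with (CT / exp mu - CT / T) by (field; lra). lra.
      apply (is_RInt_derive (V:=R_CompleteNormedModule) (fun u => - CT / u) (fun u => CT / u ^ 2)).
      intros x Hx. rewrite Rmin_left in Hx by lra. auto_derive. lra. field. lra.
      intros x Hx. rewrite Rmin_left in Hx by lra. apply cont_of_ex_derive. auto_derive. nra. }
    unfold CH. lra.
Qed.

End GI.


Section ODE.
Variables M bstar S0 I0 mu sigma : R.
Hypothesis HM : 0 < M.
Hypothesis Hb : 0 < bstar.
Hypothesis HI0 : 0 < I0 < M.
Hypothesis HS0 : 0 < S0 < M.
Hypothesis Hsum : S0 + I0 = M.
Hypothesis Hs : 0 < sigma.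

Let g := lognormal mu sigma.
Let G := Gf mu sigma.
Let GM := Gmax mu sigma.

Lemma g_nn t : 0 <= g t. Proof. apply g_nonneg; auto. Qed.
Lemma g_bd t : g t <= GM. Proof. apply g_le; auto. Qed.
Lemma g_c t : continuous g t. Proof. apply g_cont; auto. Qed.
Lemma G_le1 t : 0 <= t -> G t <= 1. Proof. apply Gf_le1; auto. Qed.
Lemma G_nn t : 0 <= t -> 0 <= G t. Proof. apply Gf_nonneg; auto. Qed.
Lemma GM_pos : 0 < GM. Proof. apply Gmax_pos; auto. Qed.
Lemma g_ex' a b : ex_RInt g a b. Proof. apply g_ex; auto. Qed.

Lemma cont_gI (I : R -> R) t x : (forall y, continuous I y) -> continuous (fun s => g (t - s) * I s) x.
Proof.
  intros HI. apply (continuous_mult (K:=R_AbsRing) (fun s => g (t - s)) I).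
  apply (continuous_comp (fun s => t - s) g). apply cont_of_ex_derive. auto_derive. auto. apply g_c.
  apply HI.
Qed.

Lemma cont_gI' (I : R -> R) t x : (forall y, continuous I y) -> continuous (fun u => g u * I (t - u)) x.
Proof.
  intros HI. apply (continuous_mult (K:=R_AbsRing) g (fun u => I (t - u))). apply g_c.
  apply (continuous_comp (fun s => t - s) I). apply cont_of_ex_derive. auto_derive. auto. apply HI.
Qed.

Lemma conv_ex (I : R -> R) t a b : (forall y, continuous I y) -> ex_RInt (fun s => g (t - s) * I s) a b.
Proof. intros. apply ex_RInt_cont. intros; apply cont_gI; auto. Qed.

Lemma conv_ex' (I : R -> R) t a b : (forall y, continuous I y) -> ex_RInt (fun u => g u * I (t - u)) a b.
Proof. intros. apply ex_RInt_cont. intros; apply cont_gI'; auto. Qed.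

Lemma gshift_ex t a b : ex_RInt (fun s => g (t - s)) a b.
Proof.
  apply ex_RInt_cont. intros x. apply (continuous_comp (fun s => t - s) g). apply cont_of_ex_derive. auto_derive. auto. apply g_c.
Qed.

Lemma conv_G t : RInt (fun s => g (t - s)) 0 t = G t.
Proof. apply RInt_reflect. apply g_ex'. apply gshift_ex. Qed.

Lemma conv_sub (I : R -> R) t : (forall y, continuous I y) -> conv g I t = RInt (fun u => g u * I (t - u)) 0 t.
Proof.
  intros HI. unfold conv.
  rewrite <- (RInt_reflect (fun s => g (t - s) * I s) t).
  apply RInt_ext. intros y _. replace (t - (t - y)) with y by ring. reflexivity.
  apply conv_ex; auto.
  apply (ex_RInt_ext (fun u => g u * I (t - u))). intros y _. replace (t - (t - y)) with y by ring. reflexivity.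
  apply conv_ex'; auto.
Qed.

Definition L := S0 * bstar * M.

Lemma L_nn : 0 <= L.
Proof. unfold L. apply Rmult_le_pos. apply Rmult_le_pos; lra. lra. Qed.

Definition InK (I : R -> R) : Prop :=
  (forall t, I0 <= I t <= M) /\ (forall t t', t <= t' -> I t <= I t') /\
  (forall t t', Rabs (I t - I t') <= L * Rabs (t - t')).

Lemma InK_cont I : InK I -> forall x, continuous I x.
Proof. intros [_ [_ HL]] x. apply lip_continuous with L. apply L_nn. auto. Qed.

Lemma conv_bounds I : InK I -> forall t, 0 <= t -> 0 <= conv g I t <= I t.
Proof.
  intros HK t Ht. pose proof (InK_cont I HK) as HC. destruct HK as [Hb1 [Hmon _]].
  split.
  - apply RInt_ge_0; auto. apply conv_ex; auto. intros x Hx. apply Rmult_le_pos. apply g_nn. specialize (Hb1 x). lra.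
  - apply Rle_trans with (RInt (fun s => g (t - s) * I t) 0 t).
    apply RInt_le; auto. apply conv_ex; auto. apply ex_RInt_cont. intros x. apply cont_gI. intros; apply continuous_const.
    intros x Hx. apply Rmult_le_compat_l. apply g_nn. apply Hmon. lra.
    rewrite RInt_mulr by apply gshift_ex. rewrite conv_G.
    pose proof (G_le1 t Ht). pose proof (G_nn t Ht). specialize (Hb1 t). nra.
Qed.

Lemma conv_lip I : InK I -> forall t t', 0 <= t <= t' ->
  Rabs (conv g I t' - conv g I t) <= (GM * M + L) * (t' - t).
Proof.
  intros HK t t' Htt. pose proof (InK_cont I HK) as HC. destruct HK as [Hb1 [Hmon HL]].
  rewrite !conv_sub by auto.
  rewrite <- (RInt_Chasles' (fun u => g u * I (t' - u)) 0 t t') by (apply conv_ex'; auto).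
  replace (RInt (fun u : R => g u * I (t' - u)) 0 t + RInt (fun u : R => g u * I (t' - u)) t t' -
   RInt (fun u : R => g u * I (t - u)) 0 t) with
   (RInt (fun u : R => g u * I (t' - u)) t t' + (RInt (fun u : R => g u * I (t' - u)) 0 t - RInt (fun u : R => g u * I (t - u)) 0 t)) by ring.
  rewrite <- RInt_minus' by (apply conv_ex'; auto).
  eapply Rle_trans. apply Rabs_triang.
  assert (H1 : Rabs (RInt (fun u => g u * I (t' - u)) t t') <= GM * M * (t' - t)).
  { eapply Rle_trans. apply RInt_abs_bound with (h := fun _ => GM * M). lra. apply conv_ex'; auto. apply ex_RInt_const.
    intros x Hx. rewrite Rabs_mult, Rabs_pos_eq by apply g_nn. rewrite Rabs_pos_eq by (specialize (Hb1 (t' - x)); lra).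
    apply Rmult_le_compat. apply g_nn. specialize (Hb1 (t' - x)); lra. apply g_bd. apply Hb1.
    rewrite RInt_const'. lra. }
  assert (H2 : Rabs (RInt (fun u => g u * I (t' - u) - g u * I (t - u)) 0 t) <= L * (t' - t)).
  { eapply Rle_trans. apply RInt_abs_bound with (h := fun u => g u * (L * (t' - t))). lra.
    apply ex_RInt_minus'; apply conv_ex'; auto. apply ex_RInt_cont. intros x.
    apply (continuous_mult (K:=R_AbsRing) g (fun _ => L * (t' - t))). apply g_c. apply continuous_const.
    intros x Hx. replace (g x * I (t' - x) - g x * I (t - x)) with (g x * (I (t' - x) - I (t - x))) by ring.
    rewrite Rabs_mult, Rabs_pos_eq by apply g_nn. apply Rmult_le_compat_l. apply g_nn.
    eapply Rle_trans. apply HL. right. f_equal. rewrite Rabs_pos_eq; lra.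
    rewrite RInt_mulr by apply g_ex'. fold (G t). pose proof (G_le1 t (proj1 Htt)). pose proof (G_nn t (proj1 Htt)).
    pose proof L_nn. assert (0 <= L * (t' - t)) by nra. change (RInt g 0 t) with (G t). nra. }
  lra.
Qed.

Definition Xf (I : R -> R) t := I t - conv g I t.
Definition Xc (I : R -> R) s := Xf I (Rmax 0 s).
Definition Yf (I : R -> R) t := RInt (Xc I) 0 t.
Definition Phi (I : R -> R) t := M - S0 * exp (- bstar * Yf I (Rmax 0 t)).
Definition LX := L + (GM * M + L).

Lemma LX_nn : 0 <= LX.
Proof. unfold LX. pose proof L_nn. pose proof GM_pos. assert (0 <= GM * M) by nra. lra. Qed.

Lemma Xf_bounds I t : InK I -> 0 <= t -> 0 <= Xf I t <= M.
Proof.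
  intros HK Ht. pose proof (conv_bounds I HK t Ht). destruct HK as [Hb1 _]. specialize (Hb1 t).
  unfold Xf. lra.
Qed.

Lemma Xf_lip I t t' : InK I -> 0 <= t -> 0 <= t' -> Rabs (Xf I t - Xf I t') <= LX * Rabs (t - t').
Proof.
  intros HK Ht Ht'.
  assert (Hgen : forall a b, 0 <= a <= b -> Rabs (Xf I a - Xf I b) <= LX * Rabs (a - b)).
  { intros a b Hab. pose proof (conv_lip I HK a b Hab). destruct HK as [_ [_ HL]].
    unfold Xf. replace (I a - conv g I a - (I b - conv g I b)) with ((I a - I b) + (conv g I b - conv g I a)) by ring.
    eapply Rle_trans. apply Rabs_triang. rewrite (Rabs_minus_sym a b), (Rabs_pos_eq (b - a)) by lra.
    specialize (HL a b). rewrite (Rabs_minus_sym a b), (Rabs_pos_eq (b - a)) in HL by lra.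
    unfold LX. lra. }
  destruct (Rle_dec t t'). apply Hgen; lra.
  rewrite Rabs_minus_sym, (Rabs_minus_sym t). apply Hgen; lra.
Qed.

Lemma Xc_lip I a b : InK I -> Rabs (Xc I a - Xc I b) <= LX * Rabs (a - b).
Proof.
  intros HK. unfold Xc. eapply Rle_trans. apply Xf_lip; auto; apply Rmax0_ge.
  apply Rmult_le_compat_l. apply LX_nn. apply Rmax0_lip.
Qed.

Lemma Xc_cont I x : InK I -> continuous (Xc I) x.
Proof. intros HK. apply lip_continuous with LX. apply LX_nn. intros; apply Xc_lip; auto. Qed.

Lemma Xc_ex I a b : InK I -> ex_RInt (Xc I) a b.
Proof. intros HK. apply ex_RInt_cont. intros; apply Xc_cont; auto. Qed.

Lemma Xc_bounds I s : InK I -> 0 <= Xc I s <= M.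
Proof. intros HK. apply Xf_bounds; auto. apply Rmax0_ge. Qed.

Lemma Y_incr I a b : InK I -> 0 <= a <= b -> 0 <= Yf I b - Yf I a <= M * (b - a).
Proof.
  intros HK Hab. unfold Yf. rewrite <- (RInt_Chasles' (Xc I) 0 a b) by (apply Xc_ex; auto).
  rewrite (Rplus_comm (RInt (Xc I) 0 a)). unfold Rminus. rewrite Rplus_assoc, Rplus_opp_r, Rplus_0_r.
  split. apply RInt_ge_0. lra. apply Xc_ex; auto. intros; apply Xc_bounds; auto.
  apply Rle_trans with (RInt (fun _ => M) a b). apply RInt_le. lra. apply Xc_ex; auto. apply ex_RInt_const.
  intros; apply Xc_bounds; auto. rewrite RInt_const'. lra.
Qed.

Lemma Y0 I : Yf I 0 = 0.
Proof. unfold Yf. apply RInt_point'. Qed.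

Lemma Y_nn I t : InK I -> 0 <= t -> 0 <= Yf I t.
Proof. intros HK Ht. pose proof (Y_incr I 0 t HK (conj (Rle_refl 0) Ht)). rewrite Y0 in H. lra. Qed.

Lemma exp_lip_aux y y' : 0 <= y <= y' -> 0 <= exp (- bstar * y) - exp (- bstar * y') <= bstar * (y' - y).
Proof.
  intros Hy. replace (exp (- bstar * y')) with (exp (- bstar * y) * exp (- bstar * (y' - y))).
  2:{ rewrite <- exp_plus. f_equal. ring. }
  pose proof (exp_ineq1_le (- bstar * (y' - y))).
  assert (exp (- bstar * (y' - y)) <= 1).
  { rewrite <- exp_0. destruct (Req_dec (- bstar * (y' - y)) 0) as [->|]. lra. left; apply exp_increasing. nra. }
  assert (exp (- bstar * y) <= 1).
  { rewrite <- exp_0. destruct (Req_dec (- bstar * y) 0) as [->|]. lra. left; apply exp_increasing. nra. }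
  pose proof (exp_pos (- bstar * y)). pose proof (exp_pos (- bstar * (y' - y))).
  split. nra. assert (0 <= bstar * (y' - y)) by nra. nra.
Qed.

Lemma exp_lip y y' : 0 <= y -> 0 <= y' -> Rabs (exp (- bstar * y) - exp (- bstar * y')) <= bstar * Rabs (y - y').
Proof.
  intros Hy Hy'. destruct (Rle_dec y y').
  - pose proof (exp_lip_aux y y' (conj Hy r)). rewrite Rabs_pos_eq by lra. rewrite Rabs_minus_sym, Rabs_pos_eq by lra. lra.
  - pose proof (exp_lip_aux y' y (conj Hy' (Rlt_le _ _ (Rnot_le_lt _ _ n)))).
    rewrite Rabs_minus_sym, Rabs_pos_eq by lra. rewrite Rabs_pos_eq by lra. lra.
Qed.

Lemma Phi_K I : InK I -> InK (Phi I).
Proof.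
  intros HK. unfold Phi. split; [|split].
  - intros t. pose proof (Y_nn I (Rmax 0 t) HK (Rmax0_ge t)).
    pose proof (exp_lip_aux 0 (Yf I (Rmax 0 t)) (conj (Rle_refl 0) H)). rewrite Rmult_0_r, exp_0 in H0.
    pose proof (exp_pos (- bstar * Yf I (Rmax 0 t))). split; nra.
  - intros t t' Htt. assert (Hm : Rmax 0 t <= Rmax 0 t') by (apply Rle_max_compat_l; auto).
    pose proof (Y_incr I _ _ HK (conj (Rmax0_ge t) Hm)).
    pose proof (Y_nn I (Rmax 0 t) HK (Rmax0_ge t)).
    pose proof (exp_lip_aux _ _ (conj H0 (ltac:(lra) : Yf I (Rmax 0 t) <= Yf I (Rmax 0 t')))). nra.
  - intros t t'. replace (M - S0 * exp (- bstar * Yf I (Rmax 0 t)) - (M - S0 * exp (- bstar * Yf I (Rmax 0 t'))))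
      with (- S0 * (exp (- bstar * Yf I (Rmax 0 t)) - exp (- bstar * Yf I (Rmax 0 t')))) by ring.
    rewrite Rabs_mult, Rabs_Ropp, Rabs_pos_eq by lra.
    eapply Rle_trans. apply Rmult_le_compat_l. lra. apply exp_lip; apply Y_nn; auto; apply Rmax0_ge.
    assert (Rabs (Yf I (Rmax 0 t) - Yf I (Rmax 0 t')) <= M * Rabs (t - t')).
    { eapply Rle_trans with (M * Rabs (Rmax 0 t - Rmax 0 t')). 2:{ apply Rmult_le_compat_l. lra. apply Rmax0_lip. }
      destruct (Rle_dec (Rmax 0 t) (Rmax 0 t')).
      - pose proof (Y_incr I _ _ HK (conj (Rmax0_ge t) r)). rewrite Rabs_minus_sym, Rabs_pos_eq by lra.
        rewrite Rabs_minus_sym, Rabs_pos_eq by lra. lra.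
      - assert (Hr : Rmax 0 t' <= Rmax 0 t) by lra. pose proof (Y_incr I (Rmax 0 t') (Rmax 0 t) HK (conj (Rmax0_ge t') Hr)). rewrite Rabs_pos_eq by lra.
        rewrite Rabs_pos_eq by lra. lra. }
    unfold L. pose proof (Rabs_pos (Yf I (Rmax 0 t) - Yf I (Rmax 0 t'))).
    replace (S0 * bstar * M * Rabs (t - t')) with (S0 * (bstar * (M * Rabs (t - t')))) by ring.
    apply Rmult_le_compat_l. lra. apply Rmult_le_compat_l. lra. auto.
Qed.

Definition lam := 4 * S0 * bstar.

Lemma lam_pos : 0 < lam.
Proof. unfold lam. nra. Qed.

Lemma conv_diff I J A s : InK I -> InK J -> 0 <= A ->
  (forall r, 0 <= r -> Rabs (I r - J r) <= A * exp (lam * r)) -> 0 <= s ->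
  Rabs (conv g I s - conv g J s) <= A * exp (lam * s).
Proof.
  intros HI HJ HA Hd Hs0. pose proof (InK_cont I HI). pose proof (InK_cont J HJ).
  unfold conv. rewrite <- RInt_minus' by (apply conv_ex; auto).
  eapply Rle_trans. apply RInt_abs_bound with (h := fun r => g (s - r) * (A * exp (lam * s))). auto.
  apply ex_RInt_minus'; apply conv_ex; auto.
  apply ex_RInt_cont. intros x. apply cont_gI. intros; apply continuous_const.
  intros r Hr. replace (g (s - r) * I r - g (s - r) * J r) with (g (s - r) * (I r - J r)) by ring.
  rewrite Rabs_mult, (Rabs_pos_eq (g (s - r))) by apply g_nn. apply Rmult_le_compat_l. apply g_nn.
  eapply Rle_trans. apply Hd. lra. apply Rmult_le_compat_l. auto.
  destruct Hr as [_ Hr]. left. apply exp_increasing. pose proof lam_pos. nra.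
  rewrite RInt_mulr by apply gshift_ex. rewrite conv_G.
  pose proof (G_le1 s Hs0). pose proof (G_nn s Hs0). pose proof (exp_pos (lam * s)).
  assert (0 <= A * exp (lam * s)) by nra. nra.
Qed.

Lemma Xf_diff I J A s : InK I -> InK J -> 0 <= A ->
  (forall r, 0 <= r -> Rabs (I r - J r) <= A * exp (lam * r)) -> 0 <= s ->
  Rabs (Xf I s - Xf J s) <= 2 * A * exp (lam * s).
Proof.
  intros HI HJ HA Hd Hs0. pose proof (conv_diff I J A s HI HJ HA Hd Hs0). specialize (Hd s Hs0).
  unfold Xf. replace (I s - conv g I s - (J s - conv g J s)) with ((I s - J s) + - (conv g I s - conv g J s)) by ring.
  eapply Rle_trans. apply Rabs_triang. rewrite Rabs_Ropp. lra.
Qed.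

Lemma Y_diff I J A t : InK I -> InK J -> 0 <= A ->
  (forall r, 0 <= r -> Rabs (I r - J r) <= A * exp (lam * r)) -> 0 <= t ->
  Rabs (Yf I t - Yf J t) <= 2 * A / lam * exp (lam * t).
Proof.
  intros HI HJ HA Hd Ht. pose proof lam_pos.
  unfold Yf. rewrite <- RInt_minus' by (apply Xc_ex; auto).
  eapply Rle_trans. apply RInt_abs_bound with (h := fun s => 2 * A * exp (lam * s)). auto.
  apply ex_RInt_minus'; apply Xc_ex; auto.
  apply ex_RInt_cont. intros x. apply cont_of_ex_derive. auto_derive. auto.
  intros s Hs1. unfold Xc. rewrite !Rmax0_pos by lra. apply Xf_diff; auto. lra.
  rewrite (is_RInt_unique _ 0 t (minus (2 * A / lam * exp (lam * t)) (2 * A / lam * exp (lam * 0)))).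
  unfold minus, plus, opp; simpl. unfold plus; simpl. rewrite Rmult_0_r, exp_0.
  assert (0 <= 2 * A / lam) by (apply Rdiv_le_0_compat; lra). lra.
  apply (is_RInt_derive (V:=R_CompleteNormedModule) (fun s => 2 * A / lam * exp (lam * s))).
  intros x _. auto_derive. auto. field. lra.
  intros x _. apply cont_of_ex_derive. auto_derive. auto.
Qed.

Lemma Phi_contr I J A t : InK I -> InK J -> 0 <= A ->
  (forall r, 0 <= r -> Rabs (I r - J r) <= A * exp (lam * r)) -> 0 <= t ->
  Rabs (Phi I t - Phi J t) <= A / 2 * exp (lam * t).
Proof.
  intros HI HJ HA Hd Ht. pose proof lam_pos. unfold Phi. rewrite Rmax0_pos by auto.
  replace (M - S0 * exp (- bstar * Yf I t) - (M - S0 * exp (- bstar * Yf J t)))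
    with (- S0 * (exp (- bstar * Yf I t) - exp (- bstar * Yf J t))) by ring.
  rewrite Rabs_mult, Rabs_Ropp, Rabs_pos_eq by lra.
  eapply Rle_trans. apply Rmult_le_compat_l. lra. apply exp_lip; apply Y_nn; auto.
  pose proof (Y_diff I J A t HI HJ HA Hd Ht).
  apply Rle_trans with (S0 * (bstar * (2 * A / lam * exp (lam * t)))).
  apply Rmult_le_compat_l. lra. apply Rmult_le_compat_l. lra. auto.
  right. unfold lam. field. lra.
Qed.

Fixpoint Iseq (n : nat) : R -> R :=
  match n with O => fun _ => I0 | S k => Phi (Iseq k) end.

Lemma const_K : InK (fun _ => I0).
Proof.
  split; [|split]. intros; lra. intros; lra. intros. rewrite Rminus_diag, Rabs_R0.
  apply Rmult_le_pos. apply L_nn. apply Rabs_pos.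
Qed.

Lemma Iseq_K n : InK (Iseq n).
Proof. induction n; simpl. apply const_K. apply Phi_K; auto. Qed.

Lemma Iseq_clamp n r : Iseq n r = Iseq n (Rmax 0 r).
Proof.
  destruct n; simpl. reflexivity. unfold Phi. f_equal. f_equal. f_equal. f_equal.
  unfold Rmax at 2. destruct Rle_dec. reflexivity. pose proof (Rmax0_ge r). lra.
Qed.

Lemma exp_ge1 r : 0 <= r -> 1 <= exp (lam * r).
Proof.
  intros Hr. rewrite <- exp_0. pose proof lam_pos. destruct (Req_dec (lam * r) 0) as [->|]. lra.
  left; apply exp_increasing. nra.
Qed.

Lemma half_pow_nn n : 0 <= (/ 2) ^ n.
Proof. apply pow_le. lra. Qed.

Lemma Iseq_step n : forall r, 0 <= r -> Rabs (Iseq (S n) r - Iseq n r) <= M * (/ 2) ^ n * exp (lam * r).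
Proof.
  induction n.
  - intros r Hr. simpl. pose proof (Iseq_K 1) as [Hb1 _]. specialize (Hb1 r). simpl in Hb1.
    rewrite Rabs_pos_eq by lra. pose proof (exp_ge1 r Hr). nra.
  - intros r Hr. change (Iseq (S (S n))) with (Phi (Iseq (S n))). change (Iseq (S n)) with (Phi (Iseq n)) at 2.
    eapply Rle_trans. apply (Phi_contr (Iseq (S n)) (Iseq n) (M * (/ 2) ^ n) r (Iseq_K (S n)) (Iseq_K n)).
    pose proof (half_pow_nn n). nra. apply IHn. auto.
    right. simpl. field.
Qed.

Lemma Iseq_cauchy n k r : 0 <= r ->
  Rabs (Iseq (n + k) r - Iseq n r) <= 2 * M * exp (lam * r) * ((/ 2) ^ n - (/ 2) ^ (n + k)).
Proof.
  intros Hr. induction k.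
  - rewrite Nat.add_0_r, Rminus_diag, Rabs_R0, Rminus_diag. lra.
  - replace (Iseq (n + S k) r - Iseq n r) with ((Iseq (S (n + k)) r - Iseq (n + k) r) + (Iseq (n + k) r - Iseq n r))
      by (rewrite Nat.add_succ_r; ring).
    eapply Rle_trans. apply Rabs_triang. pose proof (Iseq_step (n + k) r Hr).
    rewrite Nat.add_succ_r. simpl pow.
    assert (E : 2 * M * exp (lam * r) * ((/ 2) ^ n - / 2 * (/ 2) ^ (n + k)) =
      2 * M * exp (lam * r) * ((/ 2) ^ n - (/ 2) ^ (n + k)) + M * (/ 2) ^ (n + k) * exp (lam * r)) by field.
    rewrite E. lra.
Qed.

Lemma Iseq_cauchy' n m r : 0 <= r -> (n <= m)%nat ->
  Rabs (Iseq m r - Iseq n r) <= 2 * M * (/ 2) ^ n * exp (lam * r).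
Proof.
  intros Hr Hnm. replace m with (n + (m - n))%nat by lia.
  eapply Rle_trans. apply Iseq_cauchy; auto. pose proof (half_pow_nn (n + (m - n))). pose proof (exp_ge1 r Hr). 
  assert (0 <= 2 * M * exp (lam * r)) by nra. nra.
Qed.

Lemma half_small C : 0 <= C -> forall eps, 0 < eps -> exists N, forall n, (N <= n)%nat -> C * (/ 2) ^ n < eps.
Proof.
  intros HC eps Heps. assert (Hr : Rabs (/ 2) < 1) by (rewrite Rabs_pos_eq; lra).
  destruct (pow_lt_1_zero _ Hr (eps / (C + 1))) as [N HN]. apply Rdiv_lt_0_compat; lra.
  exists N. intros n Hn. specialize (HN n Hn). rewrite Rabs_pos_eq in HN by apply half_pow_nn.
  pose proof (half_pow_nn n).
  apply Rle_lt_trans with ((C + 1) * (/ 2) ^ n). nra.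
  apply Rlt_le_trans with ((C + 1) * (eps / (C + 1))). apply Rmult_lt_compat_l; lra. right; field; lra.
Qed.

Definition Istar (r : R) : R := real (Lim_seq (fun n => Iseq n r)).

Lemma Istar_lim r : is_lim_seq (fun n => Iseq n r) (Istar r).
Proof.
  apply Lim_seq_correct'. apply ex_lim_seq_cauchy_corr. intros eps.
  set (r' := Rmax 0 r). pose proof (Rmax0_ge r) as Hr'.
  pose proof (exp_ge1 r' Hr').
  destruct (half_small (2 * M * exp (lam * r')) (ltac:(nra)) eps (cond_pos eps)) as [N HN].
  exists N. intros n m Hn Hm. rewrite (Iseq_clamp n r), (Iseq_clamp m r). fold r'.
  destruct (Nat.le_ge_cases n m).
  - rewrite Rabs_minus_sym. eapply Rle_lt_trans. apply Iseq_cauchy'; auto.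
    specialize (HN n Hn). lra.
  - eapply Rle_lt_trans. apply Iseq_cauchy'; auto. specialize (HN m Hm). lra.
Qed.

Lemma lim_le_const (u : nat -> R) (l c : R) : is_lim_seq u l -> (forall n, u n <= c) -> l <= c.
Proof.
  intros Hu Hc. assert (H := is_lim_seq_le u (fun _ => c) l c Hc Hu (is_lim_seq_const c)). exact H.
Qed.

Lemma lim_ge_const (u : nat -> R) (l c : R) : is_lim_seq u l -> (forall n, c <= u n) -> c <= l.
Proof.
  intros Hu Hc. assert (H := is_lim_seq_le (fun _ => c) u c l Hc (is_lim_seq_const c) Hu). exact H.
Qed.

Lemma Istar_K : InK Istar.
Proof.
  split; [|split].
  - intros t. split.
    + apply (lim_ge_const _ _ _ (Istar_lim t)). intros n. apply (Iseq_K n).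
    + apply (lim_le_const _ _ _ (Istar_lim t)). intros n. apply (Iseq_K n).
  - intros t t' Htt. assert (H := is_lim_seq_le _ _ _ _ (fun n => proj1 (proj2 (Iseq_K n)) t t' Htt) (Istar_lim t) (Istar_lim t')).
    exact H.
  - intros t t'.
    assert (Hl : is_lim_seq (fun n => Rabs (Iseq n t - Iseq n t')) (Rabs (Istar t - Istar t'))).
    { apply (is_lim_seq_abs _ (Finite (Istar t - Istar t'))).
      apply (is_lim_seq_minus _ _ (Istar t) (Istar t')). apply Istar_lim. apply Istar_lim. reflexivity. }
    apply (lim_le_const _ _ _ Hl). intros n. apply (Iseq_K n).
Qed.

Lemma Istar_close n r : 0 <= r -> Rabs (Istar r - Iseq n r) <= 2 * M * (/ 2) ^ n * exp (lam * r).
Proof.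
  intros Hr.
  assert (Hl : is_lim_seq (fun m => Rabs (Iseq (m + n) r - Iseq n r)) (Rabs (Istar r - Iseq n r))).
  { apply (is_lim_seq_abs _ (Finite (Istar r - Iseq n r))).
    apply (is_lim_seq_minus _ _ (Istar r) (Iseq n r)).
    apply (is_lim_seq_incr_n (fun m => Iseq m r) n). apply Istar_lim. apply is_lim_seq_const. reflexivity. }
  apply (lim_le_const _ _ _ Hl). intros m. apply Iseq_cauchy'; auto. lia.
Qed.

Lemma small_zero x C : 0 <= C -> (forall n, Rabs x <= C * (/ 2) ^ n) -> x = 0.
Proof.
  intros HC Hx. destruct (Req_dec x 0) as [|Hne]; auto. exfalso.
  assert (Hp : 0 < Rabs x) by (apply Rabs_pos_lt; auto).
  destruct (half_small C HC _ Hp) as [N HN]. specialize (HN N (le_n N)). specialize (Hx N). lra.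
Qed.

Lemma Istar_fix t : 0 <= t -> Phi Istar t = Istar t.
Proof.
  intros Ht. apply Rminus_diag_uniq. apply (small_zero _ (2 * M * exp (lam * t))).
  pose proof (exp_ge1 t Ht). nra.
  intros n.
  replace (Phi Istar t - Istar t) with ((Phi Istar t - Phi (Iseq n) t) + (Iseq (S n) t - Istar t)) by (simpl; ring).
  eapply Rle_trans. apply Rabs_triang.
  assert (H1 : Rabs (Phi Istar t - Phi (Iseq n) t) <= (2 * M * (/ 2) ^ n) / 2 * exp (lam * t)).
  { apply Phi_contr; auto. apply Istar_K. apply Iseq_K. pose proof (half_pow_nn n). nra.
    intros r Hr. apply Istar_close; auto. }
  assert (H2 : Rabs (Iseq (S n) t - Istar t) <= 2 * M * (/ 2) ^ (S n) * exp (lam * t)).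
  { rewrite Rabs_minus_sym. apply Istar_close; auto. }
  simpl pow in H2. 
  apply Rle_trans with ((2 * M * (/ 2) ^ n) / 2 * exp (lam * t) + 2 * M * (/ 2 * (/ 2) ^ n) * exp (lam * t)). lra.
  right. field.
Qed.

Lemma G_derive t : is_derive G t (g t).
Proof. apply Gf_derive; auto. Qed.

Lemma G0 : G 0 = 0.
Proof. unfold G, Gf. apply RInt_point'. Qed.

Definition qf (I : R -> R) (T s : R) := I s * (1 - G (T - s)).

Lemma Derive_G y : Derive (fun x : R => Gf mu sigma x) y = g y.
Proof. apply is_derive_unique. apply G_derive. Qed.

Lemma qf_derive (I : R -> R) T s : is_derive (fun z => qf I z s) T (I s * - g (T - s)).
Proof.
  unfold qf, G. auto_derive. eexists. apply G_derive.
  rewrite Derive_G, Rmult_1_l. reflexivity.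
Qed.

Lemma Derive_qf (I : R -> R) T t : Derive (fun u : R => qf I u t) T = I t * - g (T - t).
Proof. apply is_derive_unique. apply qf_derive. Qed.

Lemma cont2_Ig (I : R -> R) x y : (forall z, continuous I z) ->
  continuity_2d_pt (fun u v => I v * - g (u - v)) x y.
Proof.
  intros HI. apply continuity_2d_pt_mult.
  apply continuity_1d_2d_pt_comp with (f := I) (g := fun _ v => v). apply continuity_pt_filterlim. apply HI.
  apply continuity_2d_pt_id2.
  apply continuity_2d_pt_opp.
  apply continuity_1d_2d_pt_comp with (f := g) (g := fun u v => u - v). apply continuity_pt_filterlim. apply g_c.
  apply continuity_2d_pt_minus. apply continuity_2d_pt_id1. apply continuity_2d_pt_id2.
Qed.

Lemma cont2_Derive (I : R -> R) x y : (forall z, continuous I z) ->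
  continuity_2d_pt (fun u v => Derive (fun z => qf I z v) u) x y.
Proof.
  intros HI. apply continuity_2d_pt_ext with (f := fun u v => I v * - g (u - v)).
  intros u v. symmetry. apply is_derive_unique. apply qf_derive.
  apply cont2_Ig; auto.
Qed.

Lemma qf_cont (I : R -> R) T s : (forall z, continuous I z) -> continuous (fun t => qf I T t) s.
Proof.
  intros HI. unfold qf. apply (continuous_mult (K:=R_AbsRing) I (fun t => 1 - G (T - t))). apply HI.
  apply cont_of_ex_derive. auto_derive. eexists. apply G_derive.
Qed.

Lemma Q_derive (I : R -> R) T : (forall z, continuous I z) ->
  is_derive (fun T => RInt (fun s => qf I T s) 0 T) T (I T - conv g I T).
Proof.
  intros HI.
  assert (H := is_derive_RInt_param_bound_comp_aux3 (qf I) 0 (fun x => x) T 1).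
  replace (I T - conv g I T) with (RInt (fun t => Derive (fun u => qf I u t) T) 0 T + qf I T T * 1).
  apply H.
  - exists (mkposreal _ Rlt_0_1). intros y _. apply ex_RInt_cont. intros; apply qf_cont; auto.
  - exists (mkposreal _ Rlt_0_1). exists (mkposreal _ Rlt_0_1). intros y _. apply ex_RInt_cont. intros; apply qf_cont; auto.
  - apply is_derive_Reals, derivable_pt_lim_id.
  - exists (mkposreal _ Rlt_0_1). exists (mkposreal _ Rlt_0_1). intros y _ t _. eexists. apply qf_derive.
  - intros t _. apply cont2_Derive; auto.
  - exists (mkposreal _ Rlt_0_1). intros u v _ _. apply cont2_Derive; auto.
  - apply continuity_pt_filterlim. apply qf_cont; auto.
  - unfold qf at 2. rewrite Rminus_diag, G0. unfold conv.
    rewrite (RInt_ext _ (fun s => - (g (T - s) * I s))).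
    2:{ intros x _. rewrite Derive_qf. rewrite <- Ropp_mult_distr_r, Rmult_comm. reflexivity. }
    assert (Hop := RInt_opp (V:=R_CompleteNormedModule) (fun s => g (T - s) * I s) 0 T (conv_ex I T 0 T HI)).
    unfold opp in Hop; simpl in Hop. rewrite Hop. ring.
Qed.

Definition Isol := Phi Istar.
Definition Ysol := Yf Istar.

Lemma Isol_K : InK Isol.
Proof. apply Phi_K, Istar_K. Qed.

Lemma Isol_eq t : 0 <= t -> Isol t = Istar t.
Proof. apply Istar_fix. Qed.

Lemma conv_Isol t : 0 <= t -> conv g Isol t = conv g Istar t.
Proof.
  intros Ht. unfold conv. apply RInt_ext. intros x Hx. rewrite Rmin_left, Rmax_right in Hx by lra.
  rewrite Isol_eq by lra. reflexivity.
Qed.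

Lemma Isol_formula t : 0 <= t -> Isol t = M - S0 * exp (- bstar * Ysol t).
Proof. intros Ht. unfold Isol, Phi, Ysol. rewrite Rmax0_pos by auto. reflexivity. Qed.

Lemma Xc_Istar t : 0 <= t -> Xc Istar t = Isol t - conv g Isol t.
Proof. intros Ht. unfold Xc, Xf. rewrite Rmax0_pos by auto. rewrite conv_Isol, Isol_eq by auto. reflexivity. Qed.

Lemma Ysol_derive t : is_derive Ysol t (Xc Istar t).
Proof.
  apply (is_derive_RInt (V:=R_NormedModule) (Xc Istar) Ysol 0 t).
  exists (mkposreal _ Rlt_0_1). intros y _. apply (RInt_correct (V:=R_CompleteNormedModule)). apply Xc_ex, Istar_K.
  apply Xc_cont, Istar_K.
Qed.

Lemma Ysol_Q T : 0 <= T -> Ysol T = RInt (fun s => qf Istar T s) 0 T.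
Proof.
  intros HT. pose proof (InK_cont _ Istar_K) as HC.
  set (D := fun x => RInt (fun s => qf Istar x s) 0 x - Ysol x).
  assert (HD : forall x, is_derive D x ((Istar x - conv g Istar x) - Xc Istar x)).
  { intros x. unfold D. apply (is_derive_minus (fun x => RInt (fun s => qf Istar x s) 0 x) Ysol).
    apply Q_derive; auto. apply Ysol_derive. }
  destruct (MVT_gen D 0 T (fun _ => 0)) as [c [_ Hc]].
  - intros x Hx. rewrite Rmin_left, Rmax_right in Hx by lra.
    replace 0 with ((Istar x - conv g Istar x) - Xc Istar x). apply HD.
    unfold Xc, Xf. rewrite Rmax0_pos by lra. ring.
  - intros x _. apply continuity_pt_filterlim. apply cont_of_ex_derive. eexists; apply HD.
  - unfold D in Hc. rewrite RInt_point' in Hc. unfold Ysol in Hc. rewrite Y0 in Hc. fold Ysol in Hc. lra.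
Qed.

Definition CHc := CH mu sigma.

Lemma Ysol_bound T : 0 <= T -> Ysol T <= M * CHc.
Proof.
  intros HT. rewrite Ysol_Q by auto. pose proof (InK_cont _ Istar_K) as HC.
  apply Rle_trans with (RInt (fun s => (1 - G (T - s)) * M) 0 T).
  - apply RInt_le; auto. apply ex_RInt_cont. intros; apply qf_cont; auto.
    apply ex_RInt_cont. intros x. apply (continuous_mult (K:=R_AbsRing) (fun s => 1 - G (T - s)) (fun _ => M)).
    apply cont_of_ex_derive. auto_derive. eexists. apply G_derive. apply continuous_const.
    intros x Hx. unfold qf. destruct Istar_K as [Hb1 _]. specialize (Hb1 x).
    pose proof (G_le1 (T - x) ltac:(lra)). rewrite Rmult_comm. apply Rmult_le_compat_l; lra.
  - rewrite RInt_mulr.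
    2:{ apply ex_RInt_cont. intros x. apply cont_of_ex_derive. auto_derive. eexists. apply G_derive. }
    rewrite (RInt_reflect (fun u => 1 - G u)).
    2: apply Hf_ex; auto.
    2:{ apply ex_RInt_cont. intros x. apply cont_of_ex_derive. auto_derive. eexists. apply G_derive. }
    pose proof (Int_H_bound mu sigma Hs T HT). fold G CHc in H. rewrite Rmult_comm. apply Rmult_le_compat_l; lra.
Qed.

Definition Imax := M - S0 * exp (- bstar * (M * CHc)).

Lemma Imax_lt : Imax < M.
Proof. unfold Imax. pose proof (exp_pos (- bstar * (M * CHc))). nra. Qed.

Lemma Isol_le_Imax t : 0 <= t -> Isol t <= Imax.
Proof.
  intros Ht. rewrite Isol_formula by auto. unfold Imax.
  pose proof (Ysol_bound t Ht). pose proof (Y_nn Istar t Istar_K Ht).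
  pose proof (exp_lip_aux _ _ (conj H0 H)). fold Ysol in H1. nra.
Qed.

Definition Ssol t := M - Isol t.
Definition dIsol t := bstar * (M - Isol t) * (Isol t - conv g Isol t).
Definition dSsol t := - bstar * Ssol t * (Isol t - conv g Isol t).
Definition Fsol t := M - S0 * exp (- bstar * Ysol t).

Lemma Derive_Ysol y : Derive (fun x : R => Ysol x) y = Xc Istar y.
Proof. apply is_derive_unique. apply Ysol_derive. Qed.

Lemma Fsol_derive t : is_derive Fsol t (S0 * bstar * exp (- bstar * Ysol t) * Xc Istar t).
Proof.
  unfold Fsol. auto_derive. eexists; apply Ysol_derive. rewrite Derive_Ysol. ring.
Qed.

Lemma Derive_Fsol y : Derive (fun x : R => Fsol x) y = S0 * bstar * exp (- bstar * Ysol y) * Xc Istar y.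
Proof. apply is_derive_unique. apply Fsol_derive. Qed.

Lemma dIsol_eq t : 0 <= t -> dIsol t = S0 * bstar * exp (- bstar * Ysol t) * Xc Istar t.
Proof. intros Ht. unfold dIsol. rewrite Xc_Istar by auto. rewrite (Isol_formula t) at 1 by auto. ring. Qed.

Lemma Isol_deriv : deriv_on_nonneg Isol dIsol.
Proof.
  apply derive_to_within with Fsol. intros; apply Isol_formula; auto.
  intros t Ht. rewrite dIsol_eq by auto. apply Fsol_derive.
Qed.

Lemma Ssol_deriv : deriv_on_nonneg Ssol dSsol.
Proof.
  apply derive_to_within with (fun t => M - Fsol t). intros; unfold Ssol; rewrite Isol_formula; auto.
  intros t Ht. replace (dSsol t) with (0 - dIsol t) by (unfold dSsol, dIsol, Ssol; ring). rewrite dIsol_eq by auto.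
  auto_derive. eexists; apply Fsol_derive. rewrite Derive_Fsol. ring.
Qed.

Lemma prod_lip a1 a2 b1 b2 A B : Rabs a1 <= A -> Rabs b2 <= B ->
  Rabs (a1 * b1 - a2 * b2) <= A * Rabs (b1 - b2) + B * Rabs (a1 - a2).
Proof.
  intros Ha Hbb. replace (a1 * b1 - a2 * b2) with (a1 * (b1 - b2) + b2 * (a1 - a2)) by ring.
  eapply Rle_trans. apply Rabs_triang. rewrite !Rabs_mult.
  pose proof (Rabs_pos (b1 - b2)). pose proof (Rabs_pos (a1 - a2)).
  apply Rplus_le_compat; apply Rmult_le_compat_r; auto.
Qed.

Definition Ld := bstar * (M * LX + M * L).

Lemma dIsol_lip x y : 0 <= x -> 0 <= y -> Rabs (dIsol x - dIsol y) <= Ld * Rabs (x - y).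
Proof.
  intros Hx Hy. unfold dIsol. rewrite <- !Xc_Istar by auto.
  replace (bstar * (M - Isol x) * Xc Istar x - bstar * (M - Isol y) * Xc Istar y)
    with (bstar * ((M - Isol x) * Xc Istar x - (M - Isol y) * Xc Istar y)) by ring.
  rewrite Rabs_mult, Rabs_pos_eq by lra. unfold Ld. rewrite Rmult_assoc. apply Rmult_le_compat_l. lra.
  destruct Isol_K as [Hb1 [_ HL]].
  eapply Rle_trans. apply prod_lip with (A := M) (B := M).
  rewrite Rabs_pos_eq; specialize (Hb1 x); lra.
  pose proof (Xc_bounds Istar y Istar_K). rewrite Rabs_pos_eq; lra.
  replace (M - Isol x - (M - Isol y)) with (- (Isol x - Isol y)) by ring. rewrite Rabs_Ropp.
  pose proof (Xc_lip Istar x y Istar_K). specialize (HL x y).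
  pose proof (Rabs_pos (x - y)).
  apply Rle_trans with (M * (LX * Rabs (x - y)) + M * (L * Rabs (x - y))).
  apply Rplus_le_compat; apply Rmult_le_compat_l; lra. right; ring.
Qed.

Lemma Ld_nn : 0 <= Ld.
Proof. unfold Ld. pose proof LX_nn. pose proof L_nn. apply Rmult_le_pos. lra. nra. Qed.

Lemma dIsol_cont : cont_on_nonneg dIsol.
Proof. apply lip_cont_on with Ld. apply Ld_nn. apply dIsol_lip. Qed.

Lemma dSsol_cont : cont_on_nonneg dSsol.
Proof.
  apply lip_cont_on with Ld. apply Ld_nn. intros x y Hx Hy.
  replace (dSsol x - dSsol y) with (- (dIsol x - dIsol y)) by (unfold dSsol, dIsol, Ssol; ring).
  rewrite Rabs_Ropp. apply dIsol_lip; auto.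
Qed.

Lemma Isol_C1 : is_C1_solution M bstar S0 I0 g Ssol Isol.
Proof.
  exists dSsol, dIsol. split; [|split; [|split; [|split; [|split; [|split; [|split]]]]]].
  - apply Ssol_deriv.
  - apply Isol_deriv.
  - apply dSsol_cont.
  - apply dIsol_cont.
  - unfold Ssol. rewrite Isol_formula by lra. unfold Ysol. rewrite Y0, Rmult_0_r, exp_0. ring.
  - rewrite Isol_formula by lra. unfold Ysol. rewrite Y0, Rmult_0_r, exp_0. lra.
  - intros; reflexivity.
  - intros; reflexivity.
Qed.

Lemma conv_clamp (f : R -> R) c : 0 <= c -> conv g f c = conv g (fun s => f (Rmax 0 s)) c.
Proof.
  intros Hc. unfold conv. apply RInt_ext. intros x Hx. rewrite Rmin_left, Rmax_right in Hx by lra.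
  rewrite Rmax0_pos by lra. reflexivity.
Qed.

Lemma conv_abs_bound (f : R -> R) c B : 0 <= c -> (forall x, continuous f x) ->
  (forall r, 0 <= r <= c -> Rabs (f r) <= B) -> Rabs (conv g f c) <= GM * B * c.
Proof.
  intros Hc Hf HB. unfold conv. eapply Rle_trans. apply RInt_abs_bound with (h := fun _ => GM * B). auto.
  apply conv_ex; auto. apply ex_RInt_const.
  intros r Hr. rewrite Rabs_mult, Rabs_pos_eq by apply g_nn. apply Rmult_le_compat. apply g_nn. apply Rabs_pos.
  apply g_bd. apply HB; lra.
  rewrite RInt_const'. right; ring.
Qed.

Lemma conv_diff_bound (f h : R -> R) c : 0 <= c -> (forall x, continuous f x) -> (forall x, continuous h x) ->
  Rabs (conv g f c - conv g h c) <= GM * RInt (fun r => Rabs (f r - h r)) 0 c.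
Proof.
  intros Hc Hf Hh. unfold conv. rewrite <- RInt_minus' by (apply conv_ex; auto).
  assert (Hexa : ex_RInt (fun r => Rabs (f r - h r)) 0 c).
  { apply ex_RInt_cont. intros x. apply continuous_Rabs_comp. apply hc_sub; auto. }
  eapply Rle_trans. apply RInt_abs_bound with (h := fun r => Rabs (f r - h r) * GM). auto.
  apply ex_RInt_minus'; apply conv_ex; auto.
  apply ex_RInt_cont. intros x. apply hc_mul. apply continuous_Rabs_comp. apply hc_sub; auto. apply continuous_const.
  intros r Hr. replace (g (c - r) * f r - g (c - r) * h r) with (g (c - r) * (f r - h r)) by ring.
  rewrite Rabs_mult, Rabs_pos_eq by apply g_nn. rewrite Rmult_comm. apply Rmult_le_compat_l. apply Rabs_pos. apply g_bd.
  rewrite RInt_mulr by auto. right; ring.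
Qed.

Lemma uniq S' I' : is_C1_solution M bstar S0 I0 g S' I' -> forall t, 0 <= t -> S' t = Ssol t /\ I' t = Isol t.
Proof.
  intros [dS [dI [HdS [HdI [HcS [HcI [HS0' [HI0' [EqI EqS]]]]]]]]] t Ht.
  pose proof (deriv_cont _ _ HdS) as HSc0. pose proof (deriv_cont _ _ HdI) as HIc0.
  set (Ic := fun s => I' (Rmax 0 s)). set (Sc := fun s => S' (Rmax 0 s)).
  assert (HIc : forall x, continuous Ic x) by (intros; apply cont_clamp; auto).
  assert (HSc : forall x, continuous Sc x) by (intros; apply cont_clamp; auto).
  assert (HIcd : forall c, 0 < c -> is_derive Ic c (dI c)) by (intros; apply deriv_clamp; auto).
  assert (HScd : forall c, 0 < c -> is_derive Sc c (dS c)) by (intros; apply deriv_clamp; auto).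
  assert (HIcv : forall c, 0 <= c -> Ic c = I' c) by (intros; unfold Ic; rewrite Rmax0_pos; auto).
  assert (HScv : forall c, 0 <= c -> Sc c = S' c) by (intros; unfold Sc; rewrite Rmax0_pos; auto).
  destruct (continuity_ab_maj (fun s => Rabs (Ic s)) 0 t Ht) as [m [Hm _]].
  { intros c _. apply continuity_pt_filterlim. apply continuous_Rabs_comp. apply HIc. }
  set (B1 := Rabs (Ic m)) in *.
  assert (HB1 : 0 <= B1) by apply Rabs_pos.
  set (Kb := B1 + GM * B1 * t).
  assert (HKb : 0 <= Kb). { unfold Kb. pose proof GM_pos. assert (0 <= GM * B1 * t) by (apply Rmult_le_pos; nra). lra. }
  assert (HX : forall c, 0 <= c <= t -> Rabs (I' c - conv g I' c) <= Kb).
  { intros c Hc. rewrite conv_clamp by lra. fold Ic.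
    eapply Rle_trans. apply Rabs_sub_le.
    pose proof (Hm c Hc). rewrite HIcv in H by lra.
    assert (Rabs (conv g Ic c) <= GM * B1 * c). { apply conv_abs_bound; auto. lra. intros r Hr. apply Hm. lra. }
    unfold Kb. pose proof GM_pos. assert (GM * B1 * c <= GM * B1 * t). { apply Rmult_le_compat_l. nra. lra. } lra. }
  assert (Hz : forall c, 0 <= c <= t -> S' c + I' c = M).
  { intros c Hc.
    set (p := fun s => Sc s + Ic s - M).
    assert (Hp : forall x, continuous p x). { intros; apply hc_sub. apply hc_add; auto. apply continuous_const. }
    assert (E := energy (fun s => p s * p s) (fun s => (dS s + dI s) * p s + p s * (dS s + dI s)) (2 * bstar * Kb) c (proj1 Hc)).
    assert (Hpc : p c * p c = 0).
    { apply E.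
      - intros x Hx. apply hd_mul; (replace (dS x + dI x) with (dS x + dI x - 0) by ring; apply hd_sub; [apply hd_add; [apply HScd | apply HIcd]; lra | apply hd_const]).
      - intros x _. apply continuity_pt_filterlim. apply hc_mul; auto.
      - intros x Hx. unfold p. rewrite HScv, HIcv by lra. rewrite EqI, EqS by lra.
        replace ((- bstar * S' x * (I' x - conv g I' x) + bstar * (M - I' x) * (I' x - conv g I' x)) * (S' x + I' x - M) +
          (S' x + I' x - M) * (- bstar * S' x * (I' x - conv g I' x) + bstar * (M - I' x) * (I' x - conv g I' x)))
          with (2 * bstar * (- (I' x - conv g I' x)) * ((S' x + I' x - M) * (S' x + I' x - M))) by ring.
        pose proof (HX x ltac:(lra)). assert (- (I' x - conv g I' x) <= Kb) by (eapply Rle_trans; [apply Rle_abs|]; rewrite Rabs_Ropp; auto).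
        assert (0 <= (S' x + I' x - M) * (S' x + I' x - M)) by (pose proof (Rle_0_sqr (S' x + I' x - M)); unfold Rsqr in *; lra).
        apply Rmult_le_compat_r; auto. nra.
      - unfold p. rewrite HScv, HIcv by lra. rewrite HS0', HI0'. rewrite Hsum. ring.
      - nra. }
    unfold p in Hpc. rewrite HScv, HIcv in Hpc by lra. nra. }
  set (d := fun s => Ic s - Isol s).
  assert (HIsc : forall x, continuous Isol x) by (apply InK_cont, Isol_K).
  assert (Hdc : forall x, continuous d x) by (intros; apply hc_sub; auto).
  set (W := fun s => RInt (fun r => Rabs (d r)) 0 s).
  assert (Had : forall x, continuous (fun r => Rabs (d r)) x) by (intros; apply continuous_Rabs_comp; auto).
  assert (HWd : forall x, is_derive W x (Rabs (d x))).
  { intros x. apply (is_derive_RInt (V:=R_NormedModule) (fun r => Rabs (d r)) W 0 x).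
    exists (mkposreal _ Rlt_0_1). intros y _. apply (RInt_correct (V:=R_CompleteNormedModule)). apply ex_RInt_cont; auto.
    apply Had. }
  assert (HWc : forall x, continuous W x) by (intros; apply cont_of_ex_derive; eexists; apply HWd).
  assert (HW0 : forall x, 0 <= x -> 0 <= W x).
  { intros x Hx. apply RInt_ge_0; auto. apply ex_RInt_cont; auto. intros; apply Rabs_pos. }
  set (C2 := 2 * bstar * (M + Kb) + bstar * M * GM + 1).
  assert (Hd0 : forall c, 0 <= c <= t -> d c = 0).
  { intros c Hc.
    assert (E := energy (fun s => d s * d s + W s * W s)
       (fun s => ((dI s - dIsol s) * d s + d s * (dI s - dIsol s)) + (Rabs (d s) * W s + W s * Rabs (d s))) C2 c (proj1 Hc)).
    assert (HV : d c * d c + W c * W c = 0).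
    { apply E.
      - intros x Hx. apply hd_add; apply hd_mul; try apply HWd; apply hd_sub; try (apply HIcd; lra); apply deriv_interior; try lra; apply Isol_deriv.
      - intros x _. apply continuity_pt_filterlim. apply (hc_add (fun s => d s * d s) (fun s => W s * W s)); apply hc_mul; auto.
      - intros x Hx. 
        assert (Hx0 : 0 <= x) by lra.
        unfold d. rewrite HIcv by lra. rewrite EqI by lra. unfold dIsol.
        fold (d x). 
        set (X' := I' x - conv g I' x). set (X := Isol x - conv g Isol x).
        assert (HdX : Rabs (X' - X - d x) <= GM * W x).
        { unfold X', X, d. rewrite HIcv by lra.
          replace (I' x - conv g I' x - (Isol x - conv g Isol x) - (I' x - Isol x)) with (- (conv g I' x - conv g Isol x)) by ring.
          rewrite Rabs_Ropp. rewrite (conv_clamp I' x) by lra. fold Ic. unfold W.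
          apply conv_diff_bound; auto. }
        assert (HX'b : Rabs X' <= Kb) by (apply HX; lra).
        assert (HIs : 0 <= M - Isol x <= M). { destruct Isol_K as [Hb2 _]. specialize (Hb2 x). lra. }
        assert (Edd : bstar * (M - I' x) * X' - bstar * (M - Isol x) * X = bstar * ((M - Isol x) * (X' - X) - d x * X')).
        { unfold d. rewrite HIcv by lra. ring. }
        rewrite Edd.
        assert (Hdd : Rabs ((M - Isol x) * (X' - X) - d x * X') <= M * (Rabs (d x) + GM * W x) + Kb * Rabs (d x)).
        { eapply Rle_trans. apply Rabs_sub_le. 
          rewrite !Rabs_mult. rewrite (Rabs_pos_eq (M - Isol x)) by lra.
          assert (Rabs (X' - X) <= Rabs (d x) + GM * W x).
          { replace (X' - X) with ((X' - X - d x) + d x) by ring. eapply Rle_trans. apply Rabs_triang. lra. }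
          pose proof (Rabs_pos (d x)). pose proof (Rabs_pos (X' - X)). pose proof (Rabs_pos X').
          apply Rplus_le_compat. apply Rmult_le_compat; lra. rewrite Rmult_comm. apply Rmult_le_compat_r; lra. }
        pose proof (HW0 x Hx0). pose proof (Rabs_pos (d x)). pose proof GM_pos.
        set (D := (M - Isol x) * (X' - X) - d x * X') in *.
        assert (K1 : (bstar * D) * d x + d x * (bstar * D) <= 2 * bstar * Rabs D * Rabs (d x)).
        { assert (D * d x <= Rabs D * Rabs (d x)) by (rewrite <- Rabs_mult; apply Rle_abs). nra. }
        assert (K2 : Rabs D * Rabs (d x) <= (M + Kb) * (d x * d x) + M * GM * (Rabs (d x) * W x)).
        { assert (Rabs (d x) * Rabs (d x) = d x * d x) by (rewrite <- Rabs_mult; apply Rabs_pos_eq; nra).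
          apply Rle_trans with ((M * (Rabs (d x) + GM * W x) + Kb * Rabs (d x)) * Rabs (d x)).
          apply Rmult_le_compat_r; auto. nra. }
        assert (K3 : 2 * (Rabs (d x) * W x) <= d x * d x + W x * W x).
        { assert (Rabs (d x) * Rabs (d x) = d x * d x) by (rewrite <- Rabs_mult; apply Rabs_pos_eq; nra).
          pose proof (Rle_0_sqr (Rabs (d x) - W x)). unfold Rsqr in *. nra. }
        unfold C2.
        assert (0 <= bstar * M * GM) by (apply Rmult_le_pos; nra).
        assert (0 <= d x * d x) by nra. assert (0 <= W x * W x) by nra.
        assert (0 <= Rabs (d x) * W x) by nra.
        assert (K4 : 2 * bstar * (Rabs D * Rabs (d x)) <= 2 * bstar * ((M + Kb) * (d x * d x) + M * GM * (Rabs (d x) * W x))) by (apply Rmult_le_compat_l; lra).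
        assert (K5 : (bstar * M * GM + 1) * (2 * (Rabs (d x) * W x)) <= (bstar * M * GM + 1) * (d x * d x + W x * W x)) by (apply Rmult_le_compat_l; lra).
        replace (I' x - Isol x) with (d x) by (unfold d; rewrite HIcv by lra; reflexivity). assert (0 <= 2 * bstar * (M + Kb) * (W x * W x)) by (apply Rmult_le_pos; [nra | lra]). lra.
      - unfold d, W. rewrite HIcv by lra. rewrite RInt_point'. rewrite HI0'. rewrite Isol_formula by lra.
        unfold Ysol. rewrite Y0, Rmult_0_r, exp_0. rewrite <- Hsum. ring.
      - nra. }
    pose proof (HW0 c (proj1 Hc)). nra. }
  split.
  - specialize (Hz t (conj Ht (Rle_refl t))). specialize (Hd0 t (conj Ht (Rle_refl t))).
    unfold d in Hd0. rewrite HIcv in Hd0 by lra. unfold Ssol. lra.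
  - specialize (Hd0 t (conj Ht (Rle_refl t))). unfold d in Hd0. rewrite HIcv in Hd0 by lra. lra.
Qed.

Lemma main_sec : exists S I : R -> R,
    is_C1_solution M bstar S0 I0 (lognormal mu sigma) S I /\
    (forall S' I' : R -> R,
        is_C1_solution M bstar S0 I0 (lognormal mu sigma) S' I' ->
        forall t, 0 <= t -> S' t = S t /\ I' t = I t) /\
    (forall t, 0 <= t -> 0 < S t < M /\ 0 < I t < M) /\
    (forall t1 t2, 0 <= t1 -> t1 <= t2 -> S t2 <= S t1) /\
    (forall t1 t2, 0 <= t1 -> t1 <= t2 -> I t1 <= I t2) /\
    (exists Sinf, 0 < Sinf /\ is_lim S p_infty Sinf) /\
    (exists Iinf, Iinf < M /\ is_lim I p_infty Iinf).
Proof.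
  exists Ssol, Isol. split; [|split; [|split; [|split; [|split; [|split]]]]].
  - apply Isol_C1.
  - intros S' I' H t Ht. apply uniq; auto.
  - intros t Ht. unfold Ssol. rewrite Isol_formula by auto.
    pose proof (Y_nn Istar t Istar_K Ht). fold Ysol in H.
    pose proof (exp_lip_aux 0 (Ysol t) (conj (Rle_refl 0) H)). rewrite Rmult_0_r, exp_0 in H0.
    pose proof (exp_pos (- bstar * Ysol t)). split; split; nra.
  - intros t1 t2 Ht1 Ht2. unfold Ssol. destruct Isol_K as [_ [Hmon _]]. specialize (Hmon t1 t2 Ht2). lra.
  - intros t1 t2 Ht1 Ht2. destruct Isol_K as [_ [Hmon _]]. apply Hmon; auto.
  - destruct (mono_lim Isol Imax) as [l [Hl Hlim]].
    intros t t' Htt. destruct Isol_K as [_ [Hmon _]]. apply Hmon; lra.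
    apply Isol_le_Imax.
    pose proof Imax_lt.
    exists (M - l). split. lra. apply eps_is_lim. intros eps. destruct (Hlim eps) as [T HT]. exists T. intros t Htt.
    unfold Ssol. replace (M - Isol t - (M - l)) with (- (Isol t - l)) by ring. rewrite Rabs_Ropp. auto.
  - destruct (mono_lim Isol Imax) as [l [Hl Hlim]].
    intros t t' Htt. destruct Isol_K as [_ [Hmon _]]. apply Hmon; lra.
    apply Isol_le_Imax.
    pose proof Imax_lt.
    exists l. split. lra. apply eps_is_lim. auto.
Qed.

End ODE.


Theorem theorem3p1 (M bstar S0 I0 mu sigma : R) :
  0 < M -> 0 < bstar -> 0 < I0 < M -> 0 < S0 < M -> S0 + I0 = M -> 0 < sigma ->
  exists S I : R -> R,
    is_C1_solution M bstar S0 I0 (lognormal mu sigma) S I /\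
    (forall S' I' : R -> R,
        is_C1_solution M bstar S0 I0 (lognormal mu sigma) S' I' ->
        forall t, 0 <= t -> S' t = S t /\ I' t = I t) /\
    (forall t, 0 <= t -> 0 < S t < M /\ 0 < I t < M) /\
    (forall t1 t2, 0 <= t1 -> t1 <= t2 -> S t2 <= S t1) /\
    (forall t1 t2, 0 <= t1 -> t1 <= t2 -> I t1 <= I t2) /\
    (exists Sinf, 0 < Sinf /\ is_lim S p_infty Sinf) /\
    (exists Iinf, Iinf < M /\ is_lim I p_infty Iinf).
Proof.
  intros HM Hb HI0 HS0 Hsum Hs. exact (main_sec M bstar S0 I0 mu sigma HM Hb HI0 HS0 Hsum Hs).
Qed.
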